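(* Suppose that, after a permutation of its columns, $A=[A^{(1)},\dots,A^{(k)}]$ where $\mathrm{New}(A^{(1)}),\dots,\mathrm{New}(A^{(k)})$ are mutually disjoint faces of $\mathrm{New}(A)$, such that (1) whenever the extreme points of $\mathrm{New}(A^{(i)})$ are affinely independent, at most two columns of $A^{(i)}$ are non-extreme points of $\mathrm{New}(A^{(i)})$, and (2) for every other $i$, at most one column of $A^{(i)}$ is a non-extreme point of $\mathrm{New}(A^{(i)})$. Then $C_{\mathrm{SAGE}}(A)=C_{\mathrm{NNS}}(A)$.
   Context: Let $A\in\mathbb{R}^{n\times m}$ have distinct columns $a_1,\dots,a_m$. For $c\in\mathbb{R}^m$, $\mathrm{Sig}(A,c)$ denotes the function $x\mapsto\sum_{i=1}^m c_i\exp(a_i^\top x)$ on $\mathbb{R}^n$. $\mathrm{New}(A)=\mathrm{conv}\{a_1,\dots,a_m\}$ is the Newton polytope. $C_{\mathrm{NNS}}(A)=\{c\in\mathbb{R}^m:\mathrm{Sig}(A,c)(x)\ge 0\ \forall x\in\mathbb{R}^n\}$. For $k\in[m]$, the $k$-th AGE cone is $C_{\mathrm{AGE}}(A,k)=\{c\in C_{\mathrm{NNS}}(A): c_i\ge 0\ \forall i\ne k\}$, and the SAGE cone is the Minkowski sum $C_{\mathrm{SAGE}}(A)=\sum_{k=1}^m C_{\mathrm{AGE}}(A,k)$. *)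

(* Defs.v *)
From Stdlib Require Import Reals.
Open Scope R_scope.

(* Points of R^n are functions nat -> R; only coordinates j < n matter.
   A matrix A in R^{n x m} is given by its columns a : nat -> (nat -> R),
   column i (i < m) being a i, with coordinates a i j (j < n). *)

Fixpoint fsum (k : nat) (f : nat -> R) : R :=
  match k with
  | O => 0
  | S k' => fsum k' f + f k'
  end.

Definition dot (n : nat) (u v : nat -> R) : R := fsum n (fun j => u j * v j).

Definition Sig (n m : nat) (a : nat -> nat -> R) (c : nat -> R) (x : nat -> R) : R :=
  fsum m (fun i => c i * exp (dot n (a i) x)).

Definition C_NNS (n m : nat) (a : nat -> nat -> R) (c : nat -> R) : Prop :=
  forall x : nat -> R, 0 <= Sig n m a c x.

Definition C_AGE (n m : nat) (a : nat -> nat -> R) (k : nat) (c : nat -> R) : Prop :=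
  C_NNS n m a c /\ (forall i, (i < m)%nat -> i <> k -> 0 <= c i).

Definition C_SAGE (n m : nat) (a : nat -> nat -> R) (c : nat -> R) : Prop :=
  exists cs : nat -> nat -> R,
    (forall k, (k < m)%nat -> C_AGE n m a k (cs k)) /\
    (forall i, (i < m)%nat -> c i = fsum m (fun k => cs k i)).

Definition eqv (n : nat) (x y : nat -> R) : Prop := forall j, (j < n)%nat -> x j = y j.

Definition conv_cols (n m : nat) (a : nat -> nat -> R) (S : nat -> Prop) (p : nat -> R) : Prop :=
  exists lam : nat -> R,
    (forall i, (i < m)%nat -> 0 <= lam i) /\
    (forall i, (i < m)%nat -> ~ S i -> lam i = 0) /\
    fsum m lam = 1 /\
    (forall j, (j < n)%nat -> p j = fsum m (fun i => lam i * a i j)).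

Definition in_open_seg (n : nat) (x y p : nat -> R) : Prop :=
  exists t, 0 < t < 1 /\ forall j, (j < n)%nat -> p j = t * x j + (1 - t) * y j.

Definition convex_set (n : nat) (C : (nat -> R) -> Prop) : Prop :=
  forall x y t, C x -> C y -> 0 <= t <= 1 ->
    forall p, (forall j, (j < n)%nat -> p j = t * x j + (1 - t) * y j) -> C p.

Definition is_face (n : nat) (F C : (nat -> R) -> Prop) : Prop :=
  (forall p, F p -> C p) /\ convex_set n F /\
  (forall x y p, C x -> C y -> in_open_seg n x y p -> F p -> F x /\ F y).

Definition is_extreme (n : nat) (C : (nat -> R) -> Prop) (p : nat -> R) : Prop :=
  C p /\ forall x y, C x -> C y -> in_open_seg n x y p -> eqv n x y.

Definition aff_indep_cols (n m : nat) (a : nat -> nat -> R) (E : nat -> Prop) : Prop :=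
  forall mu : nat -> R,
    (forall i, (i < m)%nat -> ~ E i -> mu i = 0) ->
    fsum m mu = 0 ->
    (forall j, (j < n)%nat -> fsum m (fun i => mu i * a i j) = 0) ->
    forall i, (i < m)%nat -> E i -> mu i = 0.

(* Block structure: blk i = l means column i belongs to A^(l) (l < K). *)
Definition New_blk (n m : nat) (a : nat -> nat -> R) (blk : nat -> nat) (l : nat) :=
  conv_cols n m a (fun i => blk i = l).

Definition New (n m : nat) (a : nat -> nat -> R) := conv_cols n m a (fun _ => True).

Definition extreme_col (n m : nat) (a : nat -> nat -> R) (blk : nat -> nat) (l i : nat) : Prop :=
  blk i = l /\ is_extreme n (New_blk n m a blk l) (a i).

Definition nonextreme_col (n m : nat) (a : nat -> nat -> R) (blk : nat -> nat) (l i : nat) : Prop :=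
  (i < m)%nat /\ blk i = l /\ ~ is_extreme n (New_blk n m a blk l) (a i).

(* Main.v *)
Require Import Defs.
From Stdlib Require Import Reals Lra Lia Psatz List ClassicalEpsilon Classical.
Open Scope R_scope.
Import ListNotations.


Lemma fsum_ext k f g : (forall i, (i < k)%nat -> f i = g i) -> fsum k f = fsum k g.
Proof. induction k; simpl; intros H; auto. rewrite IHk by (intros; apply H; lia). rewrite H by lia. auto. Qed.

Lemma fsum_plus k f g : fsum k (fun i => f i + g i) = fsum k f + fsum k g.
Proof. induction k; simpl; [lra|]. rewrite IHk; lra. Qed.

Lemma fsum_minus k f g : fsum k (fun i => f i - g i) = fsum k f - fsum k g.
Proof. induction k; simpl; [lra|]. rewrite IHk; lra. Qed.

Lemma fsum_scal k c f : fsum k (fun i => c * f i) = c * fsum k f.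
Proof. induction k; simpl; [lra|]. rewrite IHk; lra. Qed.

Lemma fsum_scalr k c f : fsum k (fun i => f i * c) = fsum k f * c.
Proof. induction k; simpl; [lra|]. rewrite IHk; lra. Qed.

Lemma fsum_zero k f : (forall i, (i < k)%nat -> f i = 0) -> fsum k f = 0.
Proof. intros H. rewrite (fsum_ext k f (fun _ => 0)) by auto. induction k; simpl; auto. rewrite IHk; [lra|]. intros; apply H; lia. Qed.

Lemma fsum_const0 k : fsum k (fun _ => 0) = 0.
Proof. apply fsum_zero; auto. Qed.

Lemma fsum_le k f g : (forall i, (i < k)%nat -> f i <= g i) -> fsum k f <= fsum k g.
Proof. induction k; simpl; intros H; [lra|]. assert (f k <= g k) by (apply H; lia). assert (fsum k f <= fsum k g) by (apply IHk; intros; apply H; lia). lra. Qed.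

Lemma fsum_nonneg k f : (forall i, (i < k)%nat -> 0 <= f i) -> 0 <= fsum k f.
Proof. intros H. rewrite <- (fsum_const0 k). apply fsum_le; auto. Qed.

Lemma fsum_single k f i0 : (i0 < k)%nat -> (forall i, (i < k)%nat -> i <> i0 -> f i = 0) -> fsum k f = f i0.
Proof.
  induction k; simpl; intros H1 H2; [lia|].
  destruct (Nat.eq_dec i0 k).
  - subst. rewrite fsum_zero; [lra|]. intros; apply H2; lia.
  - rewrite IHk by (try lia; intros; apply H2; lia). rewrite (H2 k) by lia. lra.
Qed.

Lemma fsum_swap k l (f : nat -> nat -> R) :
  fsum k (fun i => fsum l (fun j => f i j)) = fsum l (fun j => fsum k (fun i => f i j)).
Proof.
  induction k; simpl.
  - rewrite fsum_const0; auto.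
  - rewrite IHk. rewrite <- fsum_plus. auto.
Qed.

Lemma fsum_nonneg_zero k f : (forall i, (i < k)%nat -> 0 <= f i) -> fsum k f = 0 ->
  forall i, (i < k)%nat -> f i = 0.
Proof.
  induction k; simpl; intros H1 H2 i Hi; [lia|].
  assert (0 <= fsum k f) by (apply fsum_nonneg; intros; apply H1; lia).
  assert (0 <= f k) by (apply H1; lia).
  destruct (Nat.eq_dec i k); [subst; lra|].
  apply IHk; try lra; try lia. intros; apply H1; lia.
Qed.

Lemma fsum_pos k f i0 : (forall i, (i < k)%nat -> 0 <= f i) -> (i0 < k)%nat -> 0 < f i0 -> 0 < fsum k f.
Proof.
  intros H1 H2 H3. destruct (Rle_lt_dec (fsum k f) 0); auto.
  assert (fsum k f = 0) by (pose proof (fsum_nonneg k f H1); lra).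
  pose proof (fsum_nonneg_zero k f H1 H i0 H2). lra.
Qed.

Lemma fsum_abs k f : Rabs (fsum k f) <= fsum k (fun i => Rabs (f i)).
Proof. induction k; simpl. rewrite Rabs_R0; lra. eapply Rle_trans; [apply Rabs_triang|]. lra. Qed.

Lemma fsum_S k f : fsum (S k) f = fsum k f + f k.
Proof. reflexivity. Qed.

Lemma dot_plus_r n u v w : dot n u (fun j => v j + w j) = dot n u v + dot n u w.
Proof. unfold dot. rewrite <- fsum_plus. apply fsum_ext; intros; ring. Qed.
Lemma dot_scal_r n u c v : dot n u (fun j => c * v j) = c * dot n u v.
Proof. unfold dot. rewrite <- fsum_scal. apply fsum_ext; intros; ring. Qed.
Lemma dot_ext_l n u u' v : (forall j, (j < n)%nat -> u j = u' j) -> dot n u v = dot n u' v.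
Proof. intros H; unfold dot; apply fsum_ext; intros; rewrite H; auto. Qed.
Lemma dot_ext_r n u v v' : (forall j, (j < n)%nat -> v j = v' j) -> dot n u v = dot n u v'.
Proof. intros H; unfold dot; apply fsum_ext; intros; rewrite H; auto. Qed.

Definition EM (P : Prop) : {P} + {~P} := excluded_middle_informative P.

Lemma dot_comb n m (lam : nat -> R) (a : nat -> nat -> R) p x :
  (forall j, (j < n)%nat -> p j = fsum m (fun i => lam i * a i j)) ->
  dot n p x = fsum m (fun i => lam i * dot n (a i) x).
Proof.
  intros H. unfold dot. rewrite (fsum_ext n _ (fun j => fsum m (fun i => lam i * a i j * x j))).
  - rewrite fsum_swap. apply fsum_ext. intros. rewrite <- fsum_scal. apply fsum_ext; intros; ring.
  - intros. rewrite H by auto. rewrite <- fsum_scalr. auto.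
Qed.

Definition row : Type := ((nat -> R) * R)%type.
Definition sat (N : nat) (v : nat -> R) (r : row) : Prop := dot N (fst r) v <= snd r.
Definition rscale (c : R) (r : row) : row := (fun j => c * fst r j, c * snd r).
Definition radd (r1 r2 : row) : row := (fun j => fst r1 j + fst r2 j, snd r1 + snd r2).

Inductive derivable (sys : list row) : row -> Prop :=
| dv_in r : In r sys -> derivable sys r
| dv_scale c r : 0 < c -> derivable sys r -> derivable sys (rscale c r)
| dv_add r1 r2 : derivable sys r1 -> derivable sys r2 -> derivable sys (radd r1 r2).

Lemma der_trans sys sys' r : (forall r', In r' sys' -> derivable sys r') -> derivable sys' r -> derivable sys r.
Proof. intros H D; induction D; auto. apply dv_scale; auto. apply dv_add; auto. Qed.

Lemma der_inv sys (P : row -> Prop) :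
  (forall r, In r sys -> P r) -> (forall c r, 0 < c -> P r -> P (rscale c r)) ->
  (forall r1 r2, P r1 -> P r2 -> P (radd r1 r2)) -> forall r, derivable sys r -> P r.
Proof. intros H1 H2 H3 r D; induction D; auto. Qed.

Lemma interval_lemma (Us Ls : list R) : (forall u l, In u Us -> In l Ls -> l <= u) ->
  exists x, (forall u, In u Us -> x <= u) /\ (forall l, In l Ls -> l <= x).
Proof.
  intros H. destruct Ls as [|l0 Ls].
  - exists (fold_right Rmin 0 Us). split; [|simpl; tauto].
    clear H. induction Us; simpl; [tauto|]. intros u [->|Hu]; [apply Rmin_l|].
    eapply Rle_trans; [apply Rmin_r|]. auto.
  - assert (Hm : forall L, (forall l, In l L -> l <= fold_right Rmax l0 L) /\
        (fold_right Rmax l0 L = l0 \/ In (fold_right Rmax l0 L) L)).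
    { induction L; simpl; [split; [tauto|left; auto]|]. destruct IHL as [IH1 IH2]. split.
      + intros l [->|Hl]; [apply Rmax_l|]. eapply Rle_trans; [apply IH1; auto|apply Rmax_r].
      + destruct (Rle_dec a (fold_right Rmax l0 L)) as [h|h]; [rewrite Rmax_right by lra|rewrite Rmax_left by lra]; [destruct IH2; [left|right; right]; auto|right; left; auto]. }
    destruct (Hm Ls) as [Hm1 Hm2].
    exists (fold_right Rmax l0 Ls). split.
    + intros u Hu. destruct Hm2 as [->|Hin]; apply H; simpl; auto.
    + intros l [<-|Hl]. 2: apply Hm1; auto.
      clear Hm1 Hm2 H. induction Ls; simpl; [lra|]. eapply Rle_trans; [apply IHLs|apply Rmax_r].
Qed.

Lemma dot_lin_l N c1 g1 c2 g2 w : dot N (fun j => c1 * g1 j + c2 * g2 j) w = c1 * dot N g1 w + c2 * dot N g2 w.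
Proof. unfold dot. rewrite <- !fsum_scal, <- fsum_plus. apply fsum_ext; intros; ring. Qed.

Definition isP (N : nat) (r : row) : bool := if Rlt_dec 0 (fst r N) then true else false.
Definition isQ (N : nat) (r : row) : bool := if Rlt_dec (fst r N) 0 then true else false.
Definition isZ (N : nat) (r : row) : bool := if Req_EM_T (fst r N) 0 then true else false.
Definition comb (N : nat) (p q : row) : row := radd (rscale (/ fst p N) p) (rscale (/ (- fst q N)) q).
Definition fmstep (N : nat) (sys : list row) : list row :=
  filter (isZ N) sys ++ flat_map (fun p => map (fun q => comb N p q) (filter (isQ N) sys)) (filter (isP N) sys).

Lemma in_fmstep N sys r : In r (fmstep N sys) ->
  (In r sys /\ fst r N = 0) \/
  (exists p q, In p sys /\ In q sys /\ 0 < fst p N /\ fst q N < 0 /\ r = comb N p q).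
Proof.
  unfold fmstep. rewrite in_app_iff. intros [H|H].
  - apply filter_In in H. destruct H as [H1 H2]. unfold isZ in H2. destruct Req_EM_T; try discriminate. left; auto.
  - apply in_flat_map in H. destruct H as [p [Hp Hr]]. apply in_map_iff in Hr. destruct Hr as [q [<- Hq]].
    apply filter_In in Hp; apply filter_In in Hq. destruct Hp as [Hp1 Hp2]; destruct Hq as [Hq1 Hq2].
    unfold isP in Hp2; unfold isQ in Hq2. destruct Rlt_dec; try discriminate. destruct Rlt_dec; try discriminate.
    right. exists p, q. auto.
Qed.

Lemma dot_S N g v : dot (S N) g v = dot N g v + g N * v N.
Proof. reflexivity. Qed.

Lemma fm_lift N sys w : Forall (sat N w) (fmstep N sys) -> exists v, Forall (sat (S N) v) sys.
Proof.
  intros Hw. rewrite Forall_forall in Hw.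
  set (U := fun r : row => (snd r - dot N (fst r) w) / fst r N).
  destruct (interval_lemma (map U (filter (isP N) sys)) (map U (filter (isQ N) sys))) as [x [Hx1 Hx2]].
  { intros u l Hu Hl. apply in_map_iff in Hu; apply in_map_iff in Hl.
    destruct Hu as [p [<- Hp]]; destruct Hl as [q [<- Hq]].
    assert (Hc : In (comb N p q) (fmstep N sys)).
    { unfold fmstep. apply in_or_app; right. apply in_flat_map. exists p; split; auto. apply in_map; auto. }
    apply filter_In in Hp; apply filter_In in Hq. destruct Hp as [Hp1 Hp2]; destruct Hq as [Hq1 Hq2].
    unfold isP in Hp2; unfold isQ in Hq2. destruct Rlt_dec as [gp|]; try discriminate. destruct Rlt_dec as [gq|]; try discriminate.
    specialize (Hw _ Hc). unfold sat, comb, radd, rscale in Hw; simpl in Hw.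
    rewrite dot_lin_l in Hw.
    unfold U. set (dp := dot N (fst p) w) in *. set (dq := dot N (fst q) w) in *.
    set (a1 := fst p N) in *. set (b1 := fst q N) in *.
    apply (Rmult_le_reg_r (a1 * - b1)). nra.
    replace ((snd q - dq) / b1 * (a1 * - b1)) with (- a1 * (snd q - dq)) by (field; lra).
    replace ((snd p - dp) / a1 * (a1 * - b1)) with (- b1 * (snd p - dp)) by (field; lra).
    assert (Hm := Rmult_le_compat_l (a1 * - b1) _ _ ltac:(nra) Hw).
    replace (a1 * - b1 * (/ a1 * dp + / - b1 * dq)) with (- b1 * dp + a1 * dq) in Hm by (field; lra).
    replace (a1 * - b1 * (/ a1 * snd p + / - b1 * snd q)) with (- b1 * snd p + a1 * snd q) in Hm by (field; lra).
    lra. }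
  exists (fun j => if Nat.eq_dec j N then x else w j).
  rewrite Forall_forall. intros r Hr. unfold sat. rewrite dot_S.
  destruct (Nat.eq_dec N N) as [_|]; [|lia].
  rewrite (dot_ext_r N (fst r) _ w) by (intros j Hj; destruct Nat.eq_dec; [lia|auto]).
  destruct (Rlt_dec 0 (fst r N)) as [gp|].
  - assert (In (U r) (map U (filter (isP N) sys))).
    { apply in_map. apply filter_In. split; auto. unfold isP. destruct Rlt_dec; auto. }
    specialize (Hx1 _ H). unfold U in Hx1.
    apply (Rmult_le_compat_l (fst r N)) in Hx1; [|lra].
    replace (fst r N * ((snd r - dot N (fst r) w) / fst r N)) with (snd r - dot N (fst r) w) in Hx1 by (field; lra). lra.
  - destruct (Rlt_dec (fst r N) 0) as [gq|].
    + assert (In (U r) (map U (filter (isQ N) sys))).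
      { apply in_map. apply filter_In. split; auto. unfold isQ. destruct Rlt_dec; auto. }
      specialize (Hx2 _ H). unfold U in Hx2.
      apply (Rmult_le_compat_l (- fst r N)) in Hx2; [|lra].
      replace (- fst r N * ((snd r - dot N (fst r) w) / fst r N)) with (- (snd r - dot N (fst r) w)) in Hx2 by (field; lra). lra.
    + assert (fst r N = 0) by lra.
      assert (In r (fmstep N sys)). { unfold fmstep. apply in_or_app; left. apply filter_In. split; auto. unfold isZ. destruct Req_EM_T; auto. }
      specialize (Hw _ H0). unfold sat in Hw. rewrite H. lra.
Qed.

Theorem farkas N sys : (forall v, ~ Forall (sat N v) sys) ->
  exists r, derivable sys r /\ (forall j, (j < N)%nat -> fst r j = 0) /\ snd r < 0.
Proof.
  revert sys. induction N; intros sys H.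
  - specialize (H (fun _ => 0)). apply Classical_Prop.NNPP. intros Hn. apply H.
    rewrite Forall_forall. intros r Hr. apply Classical_Prop.NNPP. intros Hs. apply Hn.
    exists r. split; [constructor; auto|]. split; [intros; lia|]. unfold sat in Hs. unfold dot in Hs. simpl in Hs. lra.
  - destruct (IHN (fmstep N sys)) as [r [D [Hz Hneg]]].
    { intros w Hw. destruct (fm_lift N sys w Hw) as [v Hv]. apply (H v); auto. }
    exists r. split; [|split; auto].
    + apply (der_trans _ (fmstep N sys)); auto. intros r' Hr'. apply in_fmstep in Hr'.
      destruct Hr' as [[Hr' _]|Hr']; [constructor; auto|].
      destruct Hr' as [p [q [Hp [Hq [gp [gq ->]]]]]].
      unfold comb. apply dv_add; apply dv_scale; try (constructor; auto); apply Rinv_0_lt_compat; lra.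
    + intros j Hj. destruct (Nat.eq_dec j N); [|apply Hz; lia]. subst.
      revert D. apply (der_inv _ (fun r => fst r N = 0)).
      * intros r' Hr'. apply in_fmstep in Hr'. destruct Hr' as [[_ H']|[p [q [_ [_ [Hp [Hq ->]]]]]]]; auto.
        unfold comb, radd, rscale; simpl. field. lra.
      * intros c r' _ H'. unfold rscale; simpl. rewrite H'; ring.
      * intros r1 r2 H1 H2. unfold radd; simpl. rewrite H1, H2; ring.
Qed.

Lemma in_flat_seq {A} (F : nat -> list A) m r : In r (flat_map F (seq 0 m)) -> exists i, (i < m)%nat /\ In r (F i).
Proof. intros H. apply in_flat_map in H. destruct H as [i [Hi Hr]]. apply in_seq in Hi. exists i; split; auto; lia. Qed.
Lemma in_flat_seq' {A} (F : nat -> list A) m r i : (i < m)%nat -> In r (F i) -> In r (flat_map F (seq 0 m)).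
Proof. intros Hi H. apply in_flat_map. exists i; split; auto. apply in_seq; lia. Qed.

Definition delta (i : nat) : nat -> R := fun k => if Nat.eq_dec k i then 1 else 0.
Lemma fsum_delta m i f : (i < m)%nat -> fsum m (fun k => delta i k * f k) = f i.
Proof. intros H. rewrite (fsum_single m _ i H). unfold delta; destruct Nat.eq_dec; [ring|lia].
  intros k Hk Hki. unfold delta; destruct Nat.eq_dec; [lia|ring]. Qed.

Lemma solve_aff n m a (E : nat -> Prop) : aff_indep_cols n m a E -> forall z : nat -> R,
  exists x s, forall i, (i < m)%nat -> E i -> dot n (a i) x + s = z i.
Proof.
  intros HA z. apply Classical_Prop.NNPP. intros Hno.
  set (g := fun i j => if Nat.eq_dec j n then 1 else a i j).
  set (rows := flat_map (fun i => if EM (E i) then [(g i, z i); ((fun j => - g i j), - z i)] else []) (seq 0 m)).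
  assert (Hdg : forall i v, dot (S n) (g i) v = dot n (a i) v + v n).
  { intros i v. rewrite dot_S. unfold g at 2. destruct Nat.eq_dec; [|lia]. f_equal; [|ring].
    apply dot_ext_l. intros j Hj. unfold g. destruct Nat.eq_dec; [lia|auto]. }
  destruct (farkas (S n) rows) as [r [D [Hz Hn]]].
  { intros v Hv. apply Hno. exists v, (v n). intros i Hi HE. rewrite Forall_forall in Hv.
    assert (H1 : In (g i, z i) rows). { apply (in_flat_seq' _ _ _ i Hi). destruct EM; [|tauto]. simpl; auto. }
    assert (H2 : In ((fun j => - g i j), - z i) rows). { apply (in_flat_seq' _ _ _ i Hi). destruct EM; [|tauto]. simpl; auto. }
    apply Hv in H1; apply Hv in H2. unfold sat in H1, H2; simpl in H1, H2.
    rewrite Hdg in H1. assert (dot (S n) (fun j => - g i j) v = - dot (S n) (g i) v).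
    { unfold dot. rewrite (fsum_ext _ _ (fun j => -1 * (g i j * v j))) by (intros; ring). rewrite fsum_scal; ring. }
    rewrite H, Hdg in H2. lra. }
  assert (HP : exists k, (forall i, (i < m)%nat -> ~ E i -> k i = 0) /\
     (forall j, fst r j = fsum m (fun i => k i * g i j)) /\ snd r = fsum m (fun i => k i * z i)).
  { revert D. apply (der_inv _ (fun r => exists k, (forall i, (i < m)%nat -> ~ E i -> k i = 0) /\
     (forall j, fst r j = fsum m (fun i => k i * g i j)) /\ snd r = fsum m (fun i => k i * z i))).
    - intros r' Hr'. apply in_flat_seq in Hr'. destruct Hr' as [i [Hi Hr']]. destruct EM as [HE|]; [|contradiction].
      destruct Hr' as [<-|[<-|[]]].
      + exists (delta i). split; [intros k Hk HEk; unfold delta; destruct Nat.eq_dec; [subst; tauto|auto]|].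
        simpl. split; [intros j; rewrite fsum_delta; auto|rewrite fsum_delta; auto].
      + exists (fun k => - delta i k). split; [intros k Hk HEk; unfold delta; destruct Nat.eq_dec; [subst; tauto|ring]|].
        simpl. split.
        * intros j. rewrite (fsum_ext _ _ (fun k => -1 * (delta i k * g k j))) by (intros; ring). rewrite fsum_scal, fsum_delta; auto; ring.
        * rewrite (fsum_ext _ _ (fun k => -1 * (delta i k * z k))) by (intros; ring). rewrite fsum_scal, fsum_delta; auto; ring.
    - intros c r' _ [k [K1 [K2 K3]]]. exists (fun i => c * k i). split; [intros; rewrite K1; auto; ring|].
      unfold rscale; simpl. split.
      + intros j. rewrite K2, <- fsum_scal. apply fsum_ext; intros; ring.
      + rewrite K3, <- fsum_scal. apply fsum_ext; intros; ring.
    - intros r1 r2 [k1 [K1 [K2 K3]]] [k2 [L1 [L2 L3]]]. exists (fun i => k1 i + k2 i).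
      split; [intros; rewrite K1, L1; auto; ring|]. unfold radd; simpl. split.
      + intros j. rewrite K2, L2, <- fsum_plus. apply fsum_ext; intros; ring.
      + rewrite K3, L3, <- fsum_plus. apply fsum_ext; intros; ring. }
  destruct HP as [k [K1 [K2 K3]]].
  assert (Hk0 : forall i, (i < m)%nat -> k i = 0).
  { intros i Hi. destruct (classic (E i)) as [HE|HE]; [|apply K1; auto].
    apply (HA k); auto.
    - specialize (Hz n ltac:(lia)). rewrite K2 in Hz. rewrite <- Hz. apply fsum_ext. intros i' _. unfold g. destruct Nat.eq_dec; [ring|lia].
    - intros j Hj. specialize (Hz j ltac:(lia)). rewrite K2 in Hz. rewrite <- Hz. apply fsum_ext. intros i' _. unfold g. destruct Nat.eq_dec; [lia|ring]. }
  rewrite K3 in Hn. rewrite fsum_zero in Hn; [lra|]. intros i Hi. rewrite Hk0; auto; ring.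
Qed.

Lemma conv_self n m a (S : nat -> Prop) i : (i < m)%nat -> S i -> conv_cols n m a S (a i).
Proof.
  intros Hi HS. exists (delta i). repeat split.
  - intros k _. unfold delta; destruct Nat.eq_dec; lra.
  - intros k _ Hk. unfold delta; destruct Nat.eq_dec; [subst; tauto|auto].
  - rewrite (fsum_ext _ _ (fun k => delta i k * 1)) by (intros; ring). rewrite fsum_delta; auto.
  - intros j _. rewrite fsum_delta; auto.
Qed.

Lemma conv_mono n m a (S S' : nat -> Prop) p : (forall i, S i -> S' i) -> conv_cols n m a S p -> conv_cols n m a S' p.
Proof. intros H [l [L1 [L2 [L3 L4]]]]. exists l. split; [auto|split; [|split; auto]]. intros i Hi HS. apply L2; auto. Qed.

Lemma face_pull n m a (S : nat -> Prop) (F : (nat -> R) -> Prop) (mu : nat -> R) (z : nat -> R) i0 :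
  is_face n F (conv_cols n m a S) ->
  (forall i, (i < m)%nat -> 0 <= mu i) -> (forall i, (i < m)%nat -> ~ S i -> mu i = 0) -> fsum m mu = 1 ->
  (forall j, (j < n)%nat -> z j = fsum m (fun i => mu i * a i j)) -> F z -> (i0 < m)%nat -> 0 < mu i0 ->
  F (a i0).
Proof.
  intros [_ [_ Hf]] M1 M2 M3 M4 Fz Hi0 Hpos.
  assert (HS0 : S i0) by (apply NNPP; intros Hn; rewrite (M2 i0) in Hpos; auto; lra).
  set (nu := fun i => if Nat.eq_dec i i0 then 0 else mu i).
  assert (Hmu : forall i, mu i = nu i + delta i0 i * mu i0).
  { intros i. unfold nu, delta. destruct Nat.eq_dec; subst; ring. }
  assert (Hsum : fsum m nu = 1 - mu i0).
  { rewrite <- M3. rewrite (fsum_ext m mu (fun i => nu i + delta i0 i * mu i0) ) by (intros; apply Hmu). rewrite fsum_plus.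
    pose proof (fsum_delta m i0 (fun _ => mu i0) Hi0) as HH; cbv beta in HH. rewrite HH. ring. }
  assert (Hnu : forall i, (i < m)%nat -> 0 <= nu i) by (intros; unfold nu; destruct Nat.eq_dec; [lra|auto]).
  assert (Hz : forall j, (j < n)%nat -> z j = fsum m (fun i => nu i * a i j) + mu i0 * a i0 j).
  { intros j Hj. rewrite M4 by auto. rewrite (fsum_ext m _ (fun i => nu i * a i j + delta i0 i * (mu i0 * a i j))) by (intros; rewrite Hmu; ring).
    rewrite fsum_plus, fsum_delta; auto. }
  destruct (Req_dec (mu i0) 1) as [E1|E1].
  - assert (H0 : forall i, (i < m)%nat -> nu i = 0) by (apply fsum_nonneg_zero; auto; lra).
    apply (Hf (a i0) (a i0) z); try (apply conv_self; auto); auto.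
    exists (1/2). split; [lra|]. intros j Hj. rewrite Hz by auto. rewrite fsum_zero; [rewrite E1; ring|].
    intros; rewrite H0; auto; ring.
  - assert (Hlt : mu i0 < 1).
    { assert (0 <= fsum m nu) by (apply fsum_nonneg; auto). lra. }
    set (z' := fun j => fsum m (fun i => nu i / (1 - mu i0) * a i j)).
    apply (Hf (a i0) z' z); try (apply conv_self; auto); auto.
    + exists (fun i => nu i / (1 - mu i0)). repeat split.
      * intros i Hi. apply Rmult_le_pos; auto. apply Rlt_le, Rinv_0_lt_compat; lra.
      * intros i Hi HS. unfold nu. destruct Nat.eq_dec; [subst; tauto|]. rewrite M2; auto. unfold Rdiv; ring.
      * unfold Rdiv. rewrite fsum_scalr, Hsum. field. lra.
    + exists (mu i0). split; [lra|]. intros j Hj. rewrite Hz by auto. unfold z'.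
      rewrite (fsum_ext m (fun i => nu i / _ * _) (fun i => / (1 - mu i0) * (nu i * a i j))) by (intros; unfold Rdiv; ring).
      rewrite fsum_scal. field. lra.
Qed.

Lemma dot_minus_l n u w v : dot n (fun j => u j - w j) v = dot n u v - dot n w v.
Proof. unfold dot. rewrite <- fsum_minus. apply fsum_ext; intros; ring. Qed.
Lemma dot_neg_l n u v : dot n (fun j => - u j) v = - dot n u v.
Proof. unfold dot. rewrite (fsum_ext _ _ (fun j => -1 * (u j * v j))) by (intros; ring). rewrite fsum_scal; ring. Qed.

Lemma fsum_ge_term k f i : (i < k)%nat -> (forall j, (j < k)%nat -> 0 <= f j) -> f i <= fsum k f.
Proof.
  intros Hi H. induction k; [lia|]. simpl. destruct (Nat.eq_dec i k).
  - subst. pose proof (fsum_nonneg k f ltac:(intros; apply H; lia)). lra.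
  - pose proof (IHk ltac:(lia) ltac:(intros; apply H; lia)). pose proof (H k ltac:(lia)). lra.
Qed.

Definition indc (P : Prop) : R := if EM P then 1 else 0.

Lemma expose n m a (S S' : nat -> Prop) :
  (forall i, S' i -> S i) -> (exists i0, (i0 < m)%nat /\ S' i0) ->
  is_face n (conv_cols n m a S') (conv_cols n m a S) ->
  (forall i, (i < m)%nat -> S i -> ~ S' i -> ~ conv_cols n m a S' (a i)) ->
  exists v beta, (forall i, (i < m)%nat -> S' i -> dot n (a i) v = beta) /\
    (forall i, (i < m)%nat -> S i -> ~ S' i -> dot n (a i) v <= beta - 1).
Proof.
  intros HSS [i0 [Hi0 HS0]] Hface Hout.
  set (k := fsum m (fun i => indc (S' i))).
  assert (Hk : 0 < k).
  { apply (fsum_pos _ _ i0); auto. intros; unfold indc; destruct EM; lra. unfold indc; destruct EM; [lra|tauto]. }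
  set (wq := fun i => indc (S' i) / k).
  set (q := fun j => fsum m (fun i => wq i * a i j)).
  assert (Fq : conv_cols n m a S' q).
  { exists wq. repeat split.
    - intros i _. unfold wq, indc; destruct EM; unfold Rdiv; [apply Rlt_le, Rmult_lt_0_compat; [lra|apply Rinv_0_lt_compat; lra]|lra].
    - intros i _ H. unfold wq, indc; destruct EM; [tauto|]. unfold Rdiv; ring.
    - unfold wq, Rdiv. rewrite fsum_scalr. fold k. field. lra. }
  set (d := fun i j => a i j - q j).
  set (rows := flat_map (fun i => if EM (S' i) then [(d i, 0); ((fun j => - d i j), 0)]
                  else if EM (S i) then [(d i, -1)] else []) (seq 0 m)).
  destruct (classic (exists v, Forall (sat n v) rows)) as [[v Hv]|Hinf].
  - exists v, (dot n q v). rewrite Forall_forall in Hv. split.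
    + intros i Hi HS'.
      assert (H1 : In (d i, 0) rows) by (apply (in_flat_seq' _ _ _ i Hi); destruct EM; [simpl; auto|tauto]).
      assert (H2 : In ((fun j => - d i j), 0) rows) by (apply (in_flat_seq' _ _ _ i Hi); destruct EM; [simpl; auto|tauto]).
      apply Hv in H1; apply Hv in H2. unfold sat in H1, H2; simpl in H1, H2. rewrite dot_neg_l in H2.
      unfold d in H1, H2. rewrite dot_minus_l in H1, H2. lra.
    + intros i Hi HS HS'.
      assert (H1 : In (d i, -1) rows) by (apply (in_flat_seq' _ _ _ i Hi); destruct EM; [tauto|]; destruct EM; [simpl; auto|tauto]).
      apply Hv in H1. unfold sat in H1; simpl in H1. unfold d in H1. rewrite dot_minus_l in H1. lra.
  - exfalso. destruct (farkas n rows) as [r [D [Hz Hn]]].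
    { intros v Hv. apply Hinf. exists v; auto. }
    set (P := fun r : row => exists pi, (forall i, (i < m)%nat -> ~ S i -> pi i = 0) /\
        (forall i, (i < m)%nat -> S i -> ~ S' i -> 0 <= pi i) /\
        (forall j, fst r j = fsum m (fun i => pi i * d i j)) /\
        snd r = - fsum m (fun i => (1 - indc (S' i)) * pi i)).
    assert (HP : P r).
    { revert D. apply der_inv.
      - intros r' Hr'. apply in_flat_seq in Hr'. destruct Hr' as [i [Hi Hr']].
        destruct (EM (S' i)) as [HS'|HS'].
        + assert (Hsum0 : fsum m (fun k0 => (1 - indc (S' k0)) * delta i k0) = 0).
          { apply fsum_zero. intros k0 _. unfold delta, indc. destruct Nat.eq_dec; [subst; destruct EM; [ring|tauto]|ring]. }
          destruct Hr' as [<-|[<-|[]]].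
          * exists (delta i). simpl. repeat split.
            -- intros k0 _ Hk0. unfold delta; destruct Nat.eq_dec; [subst; apply HSS in HS'; tauto|auto].
            -- intros k0 _ _ _. unfold delta; destruct Nat.eq_dec; lra.
            -- intros j. rewrite fsum_delta; auto.
            -- rewrite Hsum0; ring.
          * exists (fun k0 => - delta i k0). simpl. repeat split.
            -- intros k0 _ Hk0. unfold delta; destruct Nat.eq_dec; [subst; apply HSS in HS'; tauto|ring].
            -- intros k0 _ _ Hk0. unfold delta; destruct Nat.eq_dec; [subst; tauto|lra].
            -- intros j. rewrite (fsum_ext _ _ (fun k0 => -1 * (delta i k0 * d k0 j))) by (intros; ring). rewrite fsum_scal, fsum_delta; auto. ring.
            -- rewrite (fsum_ext _ _ (fun k0 => -1 * ((1 - indc (S' k0)) * delta i k0))) by (intros; ring). rewrite fsum_scal, Hsum0. ring.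
        + destruct (EM (S i)) as [HS|HS]; [|destruct Hr'].
          destruct Hr' as [<-|[]].
          exists (delta i). simpl. repeat split.
          * intros k0 _ Hk0. unfold delta; destruct Nat.eq_dec; [subst; tauto|auto].
          * intros k0 _ _ _. unfold delta; destruct Nat.eq_dec; lra.
          * intros j. rewrite fsum_delta; auto.
          * rewrite (fsum_ext _ _ (fun k0 => delta i k0 * (1 - indc (S' k0)))) by (intros; ring).
            rewrite fsum_delta; auto. unfold indc; destruct EM; [tauto|ring].
      - intros c r' Hc [pi [P1 [P2 [P3 P4]]]]. exists (fun i => c * pi i). unfold rscale; simpl. repeat split.
        + intros; rewrite P1; auto; ring.
        + intros; apply Rmult_le_pos; [lra|auto].
        + intros j. rewrite P3, <- fsum_scal. apply fsum_ext; intros; ring.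
        + rewrite P4. rewrite (fsum_ext _ (fun i => _ * (c * _)) (fun i => c * ((1 - indc (S' i)) * pi i))) by (intros; ring). rewrite fsum_scal; ring.
      - intros r1 r2 [p1 [P1 [P2 [P3 P4]]]] [p2 [Q1 [Q2 [Q3 Q4]]]]. exists (fun i => p1 i + p2 i). unfold radd; simpl. repeat split.
        + intros; rewrite P1, Q1; auto; ring.
        + intros; apply Rplus_le_le_0_compat; auto.
        + intros j. rewrite P3, Q3, <- fsum_plus. apply fsum_ext; intros; ring.
        + rewrite P4, Q4. rewrite (fsum_ext _ (fun i => _ * (_ + _)) (fun i => (1 - indc (S' i)) * p1 i + (1 - indc (S' i)) * p2 i)) by (intros; ring).
          rewrite fsum_plus; ring. }
    destruct HP as [pi [P1 [P2 [P3 P4]]]].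
    set (M := fsum m (fun i => (1 - indc (S' i)) * pi i)).
    assert (HM : 0 < M) by (unfold M; lra).
    assert (Hd0 : forall j, (j < n)%nat -> fsum m (fun i => pi i * d i j) = 0) by (intros j Hj; rewrite <- P3; auto).
    set (mu := fun i => (1 - indc (S' i)) * pi i / M).
    set (z := fun j => fsum m (fun i => mu i * a i j)).
    assert (Hmu0 : forall i, (i < m)%nat -> 0 <= mu i).
    { intros i Hi. unfold mu, indc. destruct EM; [unfold Rdiv; lra|].
      destruct (classic (S i)). 
      - apply Rmult_le_pos; [|apply Rlt_le, Rinv_0_lt_compat; auto]. rewrite Rminus_0_r, Rmult_1_l. apply P2; auto.
      - rewrite P1; auto. unfold Rdiv; lra. }
    assert (Hmu1 : fsum m mu = 1) by (unfold mu, Rdiv; rewrite fsum_scalr; fold M; field; lra).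
    assert (Hmu2 : forall i, (i < m)%nat -> ~ S i -> mu i = 0) by (intros; unfold mu; rewrite P1; auto; unfold Rdiv; ring).
    assert (Cz : conv_cols n m a S z) by (exists mu; repeat split; auto).
    set (Pi := fsum m (fun i => indc (S' i) * pi i)).
    set (B := fsum m (fun i => indc (S' i) * Rabs (pi i - Pi / k))).
    assert (HB : 0 <= B) by (apply fsum_nonneg; intros; unfold indc; destruct EM; [rewrite Rmult_1_l; apply Rabs_pos|lra]).
    set (eps := M / (k * (1 + B))).
    assert (Heps : 0 < eps) by (unfold eps; apply Rdiv_lt_0_compat; nra).
    set (om := fun i => indc (S' i) * (/ k + eps / M * (pi i - Pi / k))).
    set (q' := fun j => fsum m (fun i => om i * a i j)).
    assert (Hq'_eq : forall j, (j < n)%nat -> q' j = q j - eps * (z j - q j)).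
    { intros j Hj.
      assert (Hzq : z j - q j = - / M * fsum m (fun i => indc (S' i) * pi i * d i j)).
      { assert (E1 : fsum m (fun i => pi i * d i j) = fsum m (fun i => indc (S' i) * pi i * d i j) + M * (z j - q j)).
        { unfold z, M, mu. 
          rewrite (fsum_ext m (fun i => (1 - indc (S' i)) * pi i / M * a i j) (fun i => / M * ((1 - indc (S' i)) * pi i * a i j))) by (intros; unfold Rdiv; ring).
          rewrite fsum_scal.
          replace (fsum m (fun i => (1 - indc (S' i)) * pi i) * (/ M * fsum m (fun i => (1 - indc (S' i)) * pi i * a i j) - q j))
            with (fsum m (fun i => (1 - indc (S' i)) * pi i * a i j) - fsum m (fun i => (1 - indc (S' i)) * pi i) * q j)
            by (fold M; field; lra).
          rewrite <- fsum_scalr, <- fsum_minus, <- fsum_plus. apply fsum_ext. intros; unfold d; ring. }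
        rewrite Hd0 in E1 by auto. apply (Rmult_eq_reg_l M); [|lra]. field_simplify; [lra|lra]. }
      rewrite Hzq. unfold q', om, q, wq.
      rewrite (fsum_ext m (fun i => indc (S' i) * (/ k + eps / M * (pi i - Pi / k)) * a i j)
         (fun i => indc (S' i) / k * a i j + eps / M * (indc (S' i) * pi i * a i j) - eps / M * Pi / k * (indc (S' i) * a i j))) by (intros; field; lra).
      rewrite !fsum_minus, fsum_plus, !fsum_scal.
      unfold d. rewrite (fsum_ext m (fun i => indc (S' i) * pi i * (a i j - q j)) (fun i => indc (S' i) * pi i * a i j - indc (S' i) * pi i * q j)) by (intros; ring).
      rewrite fsum_minus, fsum_scalr. fold Pi.
      assert (Eq : fsum m (fun i => indc (S' i) * a i j) = k * q j).
      { unfold q, wq. rewrite <- fsum_scal. apply fsum_ext; intros; field; lra. }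
      rewrite Eq. field. split; lra. }
    assert (Cq' : conv_cols n m a S' q').
    { exists om. repeat split.
      - intros i Hi. unfold om. assert (Hind : indc (S' i) = 1 \/ indc (S' i) = 0) by (unfold indc; destruct EM; auto).
        assert (Hind2 : S' i -> indc (S' i) = 1) by (unfold indc; destruct EM; tauto).
        destruct (classic (S' i)) as [HS'|HS']; [|assert (indc (S' i) = 0) by (unfold indc; destruct EM; tauto); rewrite H; lra].
        rewrite Hind2 by auto. rewrite Rmult_1_l.
        assert (HabsB : Rabs (pi i - Pi / k) <= B).
        { apply Rle_trans with (indc (S' i) * Rabs (pi i - Pi / k)); [rewrite Hind2; auto; lra|].
          unfold B. apply (fsum_ge_term m (fun i1 => indc (S' i1) * Rabs (pi i1 - Pi / k)) i Hi).
          intros; unfold indc; destruct EM; [rewrite Rmult_1_l; apply Rabs_pos|lra]. }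
        replace (eps / M) with (/ (k * (1 + B))) by (unfold eps; field; split; lra).
        assert (Ht : 0 < / (k * (1 + B))) by (apply Rinv_0_lt_compat; nra).
        replace (/ k) with ((1 + B) * / (k * (1 + B))) by (field; lra).
        pose proof (Rle_abs (- (pi i - Pi / k))). rewrite Rabs_Ropp in H. nra.
      - intros i _ H. unfold om, indc; destruct EM; [tauto|ring].
      - unfold om. rewrite (fsum_ext m _ (fun i => indc (S' i) / k + eps / M * (indc (S' i) * pi i) - eps / M * Pi / k * indc (S' i))) by (intros; field; lra).
        rewrite !fsum_minus, fsum_plus, !fsum_scal. fold Pi. unfold Rdiv at 1. rewrite fsum_scalr. fold k. field. lra. }
    assert (Fz : conv_cols n m a S' z).
    { apply (proj2 (proj2 Hface) z q' q); auto.
      - apply (conv_mono _ _ _ S'); auto.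
      - exists (eps / (1 + eps)). split.
        + split; [apply Rdiv_lt_0_compat; lra|]. apply (Rmult_lt_reg_r (1 + eps)); [lra|]. field_simplify; lra.
        + intros j Hj. rewrite Hq'_eq by auto. field. lra. }
    destruct (Rle_lt_dec M 0) as [|_]; [lra|].
    assert (Hex : exists i1, (i1 < m)%nat /\ 0 < mu i1).
    { apply NNPP; intros Hn'. assert (fsum m mu <= 0).
      { rewrite <- (fsum_const0 m). apply fsum_le. intros i Hi. destruct (Rle_lt_dec (mu i) 0); auto. exfalso; apply Hn'; eauto. }
      lra. }
    destruct Hex as [i1 [Hi1 Hmu]].
    assert (HS1 : S i1) by (apply NNPP; intros Hn'; rewrite Hmu2 in Hmu; auto; lra).
    assert (HS1' : ~ S' i1) by (intros H'; unfold mu, indc in Hmu; destruct EM; [unfold Rdiv in Hmu; lra|tauto]).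
    apply (Hout i1 Hi1 HS1 HS1').
    apply (face_pull n m a S _ mu z i1); auto.
Qed.

Lemma exp_le x y : x <= y -> exp x <= exp y.
Proof. intros [H|H]; [apply Rlt_le, exp_increasing; auto|subst; lra]. Qed.

Lemma Sig_ext n m a c c' x : (forall i, (i < m)%nat -> c i = c' i) -> Sig n m a c x = Sig n m a c' x.
Proof. intros H; unfold Sig; apply fsum_ext; intros; rewrite H; auto. Qed.
Lemma NNS_ext n m a c c' : (forall i, (i < m)%nat -> c i = c' i) -> C_NNS n m a c -> C_NNS n m a c'.
Proof. intros H N x. rewrite <- (Sig_ext n m a c c'); auto. Qed.
Lemma Sig_plus n m a c1 c2 x : Sig n m a (fun i => c1 i + c2 i) x = Sig n m a c1 x + Sig n m a c2 x.
Proof. unfold Sig. rewrite <- fsum_plus. apply fsum_ext; intros; ring. Qed.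
Lemma NNS_plus n m a c1 c2 : C_NNS n m a c1 -> C_NNS n m a c2 -> C_NNS n m a (fun i => c1 i + c2 i).
Proof. intros H1 H2 x. rewrite Sig_plus. specialize (H1 x); specialize (H2 x); lra. Qed.
Lemma NNS_zero n m a : C_NNS n m a (fun _ => 0).
Proof. intros x. unfold Sig. rewrite fsum_zero; [lra|]. intros; ring. Qed.
Lemma AGE_zero n m a k : C_AGE n m a k (fun _ => 0).
Proof. split; [apply NNS_zero|intros; lra]. Qed.
Lemma AGE_plus n m a k c1 c2 : C_AGE n m a k c1 -> C_AGE n m a k c2 -> C_AGE n m a k (fun i => c1 i + c2 i).
Proof. intros [A1 B1] [A2 B2]. split; [apply NNS_plus; auto|]. intros i Hi Hk. specialize (B1 i Hi Hk); specialize (B2 i Hi Hk); lra. Qed.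
Lemma AGE_ext n m a k c c' : (forall i, (i < m)%nat -> c i = c' i) -> C_AGE n m a k c -> C_AGE n m a k c'.
Proof. intros H [A B]. split; [apply (NNS_ext _ _ _ c); auto|]. intros i Hi Hk. rewrite <- H; auto. Qed.

Lemma SAGE_NNS n m a c : C_SAGE n m a c -> C_NNS n m a c.
Proof.
  intros [cs [H1 H2]] x.
  rewrite (Sig_ext n m a c (fun i => fsum m (fun k => cs k i))) by auto.
  unfold Sig. rewrite (fsum_ext m _ (fun i => fsum m (fun k => cs k i * exp (dot n (a i) x)))) by (intros; rewrite <- fsum_scalr; auto).
  rewrite fsum_swap. apply fsum_nonneg. intros k Hk. apply (H1 k Hk).
Qed.

Lemma SAGE_ext n m a c c' : (forall i, (i < m)%nat -> c i = c' i) -> C_SAGE n m a c -> C_SAGE n m a c'.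
Proof. intros H [cs [H1 H2]]. exists cs. split; auto. intros; rewrite <- H; auto. Qed.

Lemma SAGE_zero n m a : C_SAGE n m a (fun _ => 0).
Proof. exists (fun _ _ => 0). split; [intros; apply AGE_zero|]. intros; rewrite fsum_const0; auto. Qed.

Lemma SAGE_plus n m a c1 c2 : C_SAGE n m a c1 -> C_SAGE n m a c2 -> C_SAGE n m a (fun i => c1 i + c2 i).
Proof.
  intros [cs1 [A1 B1]] [cs2 [A2 B2]]. exists (fun k i => cs1 k i + cs2 k i). split.
  - intros k Hk. apply AGE_plus; auto.
  - intros i Hi. rewrite fsum_plus, B1, B2; auto.
Qed.

Lemma AGE_SAGE n m a k c : (k < m)%nat -> C_AGE n m a k c -> C_SAGE n m a c.
Proof.
  intros Hk H. exists (fun k' => if Nat.eq_dec k' k then c else fun _ => 0). split.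
  - intros k' _. destruct Nat.eq_dec; [subst; auto|apply AGE_zero].
  - intros i Hi. rewrite (fsum_single m _ k Hk). destruct Nat.eq_dec; auto; lia.
    intros k' _ Hne. destruct Nat.eq_dec; auto; lia.
Qed.

Lemma SAGE_fsum n m a K (cl : nat -> nat -> R) : (forall l, (l < K)%nat -> C_SAGE n m a (cl l)) ->
  C_SAGE n m a (fun i => fsum K (fun l => cl l i)).
Proof.
  induction K; intros H; simpl.
  - apply SAGE_zero.
  - apply SAGE_plus; [apply IHK|apply H]; auto.
Qed.

Lemma restrict_nns n m a c (S' : nat -> Prop) v beta :
  C_NNS n m a c ->
  (forall i, (i < m)%nat -> S' i -> dot n (a i) v = beta) ->
  (forall i, (i < m)%nat -> ~ S' i -> c i = 0 \/ dot n (a i) v <= beta - 1) ->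
  C_NNS n m a (fun i => if EM (S' i) then c i else 0).
Proof.
  intros HN H1 H2 x. apply Rnot_lt_le. intros Hneg.
  set (eta := - Sig n m a (fun i => if EM (S' i) then c i else 0) x).
  set (M := fsum m (fun i => Rabs (c i) * exp (dot n (a i) x))).
  assert (HM : 0 <= M) by (apply fsum_nonneg; intros; apply Rmult_le_pos; [apply Rabs_pos|apply Rlt_le, exp_pos]).
  set (T := (M + 1) / eta + 1).
  assert (Heta : 0 < eta) by (unfold eta; lra).
  assert (HT : 1 < T) by (unfold T; assert (0 < (M+1)/eta) by (apply Rdiv_lt_0_compat; lra); lra).
  set (t := ln T).
  assert (Ht : 0 < t) by (unfold t; rewrite <- ln_1; apply ln_increasing; lra).
  set (y := fun j => x j + t * v j).
  specialize (HN y).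
  assert (Hterm : forall i, (i < m)%nat -> c i * exp (dot n (a i) y) <= exp (t * beta) *
     ((if EM (S' i) then c i else 0) * exp (dot n (a i) x) + Rabs (c i) * exp (dot n (a i) x) * / T)).
  { intros i Hi.
    assert (Hd : dot n (a i) y = dot n (a i) x + t * dot n (a i) v) by (unfold y; rewrite dot_plus_r, dot_scal_r; auto).
    rewrite Hd, exp_plus.
    assert (Hp : 0 <= Rabs (c i) * exp (dot n (a i) x) * / T * exp (t * beta)).
    { repeat apply Rmult_le_pos; try apply Rabs_pos; try (apply Rlt_le, exp_pos); apply Rlt_le, Rinv_0_lt_compat; lra. }
    destruct (EM (S' i)) as [HS|HS].
    - rewrite H1 by auto. nra.
    - destruct (H2 i Hi HS) as [Hc|Hv].
      + rewrite Hc, Rabs_R0. right; ring.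
      + assert (E1 : exp (t * dot n (a i) v) <= exp (t * beta) * / T).
        { replace (/ T) with (exp (- t)) by (unfold t; rewrite exp_Ropp, exp_ln; lra).
          rewrite <- exp_plus. apply exp_le. nra. }
        pose proof (Rle_abs (c i)). pose proof (exp_pos (dot n (a i) x)). pose proof (exp_pos (t * dot n (a i) v)).
        pose proof (Rabs_pos (c i)).
        apply Rle_trans with (Rabs (c i) * exp (dot n (a i) x) * exp (t * dot n (a i) v)); [rewrite (Rmult_assoc (Rabs (c i))); apply Rmult_le_compat_r; [apply Rlt_le, Rmult_lt_0_compat; apply exp_pos|apply Rle_abs]|].
        replace (exp (t * beta) * (0 * exp (dot n (a i) x) + Rabs (c i) * exp (dot n (a i) x) * / T))
          with (Rabs (c i) * exp (dot n (a i) x) * (exp (t * beta) * / T)) by ring.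
        apply Rmult_le_compat_l; [nra|auto]. }
  assert (Hle : Sig n m a c y <= exp (t * beta) * (Sig n m a (fun i => if EM (S' i) then c i else 0) x + M / T)).
  { eapply Rle_trans; [apply fsum_le; exact Hterm|]. rewrite fsum_scal, fsum_plus, fsum_scalr. unfold Sig, M, Rdiv. lra. }
  assert (HMT : M / T < eta).
  { apply (Rmult_lt_reg_r T); [lra|]. replace (M / T * T) with M by (field; lra).
    replace (eta * T) with (M + 1 + eta) by (unfold T; field; lra). lra. }
  assert (0 < exp (t * beta)) by apply exp_pos.
  assert (Sig n m a (fun i => if EM (S' i) then c i else 0) x + M / T < 0) by (unfold eta in HMT; lra).
  nra.
Qed.

Definition G m (lam y : nat -> R) : R := exp (fsum m (fun i => lam i * ln (y i))).

Lemma ln_le' x y : 0 < x -> x <= y -> ln x <= ln y.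
Proof. intros H [H'|H']; [apply Rlt_le, ln_increasing; auto|subst; lra]. Qed.

Lemma amgm m (lam Z : nat -> R) : (forall i, (i < m)%nat -> 0 <= lam i) -> fsum m lam = 1 ->
  (forall i, (i < m)%nat -> 0 < lam i -> 0 < Z i) ->
  exp (fsum m (fun i => lam i * ln (Z i))) <= fsum m (fun i => lam i * Z i).
Proof.
  intros H1 H2 H3. set (M := fsum m (fun i => lam i * ln (Z i))).
  apply Rle_trans with (fsum m (fun i => lam i * (exp M * (1 + ln (Z i) - M)))).
  - rewrite (fsum_ext m _ (fun i => exp M * lam i + exp M * (lam i * ln (Z i)) - M * exp M * lam i)) by (intros; ring).
    rewrite !fsum_minus, fsum_plus, !fsum_scal. fold M. rewrite H2. lra.
  - apply fsum_le. intros i Hi. destruct (H1 i Hi) as [Hp|Hz]; [|rewrite <- Hz; lra].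
    apply Rmult_le_compat_l; [lra|]. specialize (H3 i Hi Hp).
    pose proof (exp_ineq1_le (ln (Z i) - M)). rewrite <- (exp_ln (Z i)) at 2 by auto.
    replace (ln (Z i)) with (M + (ln (Z i) - M)) at 2 by ring. rewrite exp_plus.
    pose proof (exp_pos M). nra.
Qed.

Definition bary n m (a : nat -> nat -> R) (E : nat -> Prop) (lam : nat -> R) (p : nat) : Prop :=
  (forall i, (i < m)%nat -> 0 <= lam i) /\ (forall i, (i < m)%nat -> ~ E i -> lam i = 0) /\ fsum m lam = 1 /\
  (forall j, (j < n)%nat -> a p j = fsum m (fun i => lam i * a i j)).

Lemma age_from_sol n m a (E : nat -> Prop) lam p0 (y : nat -> R) a0 al (u : nat -> R) :
  bary n m a E lam p0 -> (p0 < m)%nat -> ~ E p0 ->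
  (forall i, (i < m)%nat -> E i -> 0 < y i) -> 0 < a0 -> al * G m lam y <= a0 -> u p0 = - al ->
  (forall i, (i < m)%nat -> i <> p0 -> 0 <= u i /\ (E i -> lam i * a0 <= u i * y i)) ->
  C_AGE n m a p0 u.
Proof.
  intros [B1 [B2 [B3 B4]]] Hp0 HE0 Hy Ha0 Hal Hu0 Hu. split; [|intros i Hi Hne; apply Hu; auto].
  intros z. unfold Sig.
  assert (Hl0 : lam p0 = 0) by (apply B2; auto).
  apply Rle_trans with (fsum m (fun i => lam i * (a0 / y i * exp (dot n (a i) z)) + delta p0 i * (u p0 * exp (dot n (a p0) z)))).
  - rewrite fsum_plus. rewrite fsum_delta by auto.
    assert (HG : 0 < G m lam y) by apply exp_pos.
    assert (Ham : a0 / G m lam y * exp (dot n (a p0) z) <= fsum m (fun i => lam i * (a0 / y i * exp (dot n (a i) z)))).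
    { eapply Rle_trans; [|apply amgm; auto].
      - right. rewrite (fsum_ext m _ (fun i => lam i * ln a0 - lam i * ln (y i) + lam i * dot n (a i) z)).
        + rewrite fsum_plus, fsum_minus, fsum_scalr, B3. rewrite <- (dot_comb n m lam a (a p0) z B4).
          unfold G. rewrite Rmult_1_l. unfold Rminus. rewrite !exp_plus, exp_Ropp, exp_ln by auto. unfold Rdiv. ring.
        + intros i Hi. destruct (classic (E i)) as [HE|HE]; [|rewrite B2; auto; ring].
          unfold Rdiv. rewrite ln_mult, ln_mult, ln_Rinv, ln_exp; try ring; try apply Rinv_0_lt_compat; auto;
            try apply exp_pos; try apply Rmult_lt_0_compat; auto; try apply Rinv_0_lt_compat; auto.
      - intros i Hi Hl. assert (E i) by (apply NNPP; intros HE; rewrite B2 in Hl; auto; lra).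
        apply Rmult_lt_0_compat; [apply Rdiv_lt_0_compat; auto|apply exp_pos]. }
    rewrite Hu0.
    assert (a0 / G m lam y * exp (dot n (a p0) z) - al * exp (dot n (a p0) z) >= 0).
    { assert (al <= a0 / G m lam y) by (apply (Rmult_le_reg_r (G m lam y)); auto; unfold Rdiv; rewrite Rmult_assoc, Rinv_l; lra).
      pose proof (exp_pos (dot n (a p0) z)). nra. }
    lra.
  - apply fsum_le. intros i Hi. destruct (Nat.eq_dec i p0) as [->|Hne].
    + rewrite Hl0. unfold delta. destruct Nat.eq_dec; [|lia]. lra.
    + unfold delta. destruct Nat.eq_dec; [lia|]. rewrite Rmult_0_l, Rplus_0_r.
      destruct (Hu i Hi Hne) as [U1 U2]. pose proof (exp_pos (dot n (a i) z)).
      destruct (classic (E i)) as [HE|HE].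
      * specialize (U2 HE). specialize (Hy i Hi HE).
        assert (lam i * (a0 / y i) <= u i) by (apply (Rmult_le_reg_r (y i)); auto; unfold Rdiv; field_simplify; lra).
        nra.
      * rewrite B2; auto. nra.
Qed.

Definition Wset n m a (E : nat -> Prop) p q lam mu (c : nat -> R) : Prop :=
  aff_indep_cols n m a E /\ (p < m)%nat /\ (q < m)%nat /\ p <> q /\ ~ E p /\ ~ E q /\
  bary n m a E lam p /\ bary n m a E mu q /\ (forall i, (i < m)%nat -> E i -> 0 <= c i) /\
  c p < 0 /\ c q < 0 /\ (forall i, (i < m)%nat -> ~ E i -> i <> p -> i <> q -> c i = 0) /\ C_NNS n m a c.

Lemma ind_T (P : Prop) : P -> indc P = 1.
Proof. unfold indc; destruct EM; tauto. Qed.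
Lemma ind_F (P : Prop) : ~ P -> indc P = 0.
Proof. unfold indc; destruct EM; tauto. Qed.

Lemma exp_dot_bary n m a (E : nat -> Prop) lam p x s (y : nat -> R) :
  bary n m a E lam p -> (forall i, (i < m)%nat -> E i -> dot n (a i) x + s = ln (y i)) ->
  exp (dot n (a p) x) = G m lam y * exp (- s).
Proof.
  intros [B1 [B2 [B3 B4]]] H. rewrite (dot_comb n m lam a (a p) x B4).
  rewrite (fsum_ext m _ (fun i => lam i * ln (y i) - s * lam i)).
  - rewrite fsum_minus, fsum_scal, B3. unfold G, Rminus. rewrite exp_plus. f_equal. f_equal. ring.
  - intros i Hi. destruct (classic (E i)) as [HE|HE].
    + rewrite <- H by auto. ring.
    + rewrite B2 by auto. ring.
Qed.

Lemma W1 n m a E p q lam mu c : Wset n m a E p q lam mu c ->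
  forall y, (forall i, (i < m)%nat -> E i -> 0 < y i) ->
  (- c p) * G m lam y + (- c q) * G m mu y <= fsum m (fun i => indc (E i) * c i * y i).
Proof.
  intros [HA [Hp [Hq [Hpq [HEp [HEq [Bl [Bm [Hc0 [Hcp [Hcq [Hc1 HN]]]]]]]]]]]] y Hy.
  destruct (solve_aff n m a E HA (fun i => ln (y i))) as [x [s Hxs]].
  specialize (HN x). unfold Sig in HN.
  rewrite (fsum_ext m _ (fun i => exp (- s) * (indc (E i) * c i * y i) + delta p i * (exp (- s) * (c p * G m lam y))
      + delta q i * (exp (- s) * (c q * G m mu y)))) in HN.
  - rewrite !fsum_plus, fsum_scal, !fsum_delta in HN by auto.
    pose proof (exp_pos (- s)).
    assert (0 <= exp (- s) * (fsum m (fun i => indc (E i) * c i * y i) + c p * G m lam y + c q * G m mu y)) by lra.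
    assert (0 <= fsum m (fun i => indc (E i) * c i * y i) + c p * G m lam y + c q * G m mu y).
    { apply (Rmult_le_reg_l (exp (- s))); auto. lra. }
    lra.
  - intros i Hi. unfold delta. destruct (classic (E i)) as [HE|HE].
    + destruct Nat.eq_dec; [subst; tauto|]. destruct Nat.eq_dec; [subst; tauto|].
      rewrite ind_T by auto. replace (dot n (a i) x) with (ln (y i) + - s) by (rewrite <- Hxs by auto; ring).
      rewrite exp_plus, exp_ln by auto. ring.
    + rewrite ind_F by auto. destruct (Nat.eq_dec i p) as [->|Hip].
      * destruct Nat.eq_dec; [lia|]. rewrite (exp_dot_bary n m a E lam p x s y Bl Hxs). ring.
      * destruct (Nat.eq_dec i q) as [->|Hiq].
        -- rewrite (exp_dot_bary n m a E mu q x s y Bm Hxs). ring.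
        -- rewrite Hc1 by auto. ring.
Qed.

Definition Rl (E : nat -> Prop) (lam mu : nat -> R) (i : nat) : Prop := E i /\ 0 < lam i + mu i.

Lemma not_Rl n m a (E : nat -> Prop) lam mu p q i : bary n m a E lam p -> bary n m a E mu q -> (i < m)%nat ->
  ~ Rl E lam mu i -> lam i = 0 /\ mu i = 0.
Proof.
  intros [A1 [A2 _]] [B1 [B2 _]] Hi H. unfold Rl in H.
  destruct (classic (E i)) as [HE|HE].
  - assert (~ 0 < lam i + mu i) by tauto. specialize (A1 i Hi); specialize (B1 i Hi). split; lra.
  - split; [apply A2|apply B2]; auto.
Qed.

Lemma W2 n m a E p q lam mu c : Wset n m a E p q lam mu c ->
  forall y, (forall i, (i < m)%nat -> Rl E lam mu i -> 0 < y i) ->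
  (- c p) * G m lam y + (- c q) * G m mu y <= fsum m (fun i => indc (Rl E lam mu i) * c i * y i).
Proof.
  intros HW y Hy. pose proof HW as [HA [Hp [Hq [Hpq [HEp [HEq [Bl [Bm [Hc0 [Hcp [Hcq [Hc1 HN]]]]]]]]]]]].
  apply Rnot_lt_le. intros Hlt.
  set (L := (- c p) * G m lam y + (- c q) * G m mu y) in *.
  set (Rr := fsum m (fun i => indc (Rl E lam mu i) * c i * y i)) in *.
  set (B := fsum m (fun i => indc (E i /\ ~ Rl E lam mu i) * c i)).
  assert (HB : 0 <= B).
  { apply fsum_nonneg. intros i Hi. unfold indc; destruct EM as [[HE _]|]; [rewrite Rmult_1_l; apply Hc0; auto|lra]. }
  set (eps := (L - Rr) / (2 * (B + 1))).
  assert (Heps : 0 < eps) by (apply Rdiv_lt_0_compat; lra).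
  set (y' := fun i => if EM (Rl E lam mu i) then y i else eps).
  assert (HG : forall lm, (forall i, (i < m)%nat -> ~ Rl E lam mu i -> lm i = 0) -> G m lm y' = G m lm y).
  { intros lm Hlm. unfold G. f_equal. apply fsum_ext. intros i Hi. unfold y'. destruct EM; auto. rewrite Hlm; auto; ring. }
  pose proof (W1 n m a E p q lam mu c HW y') as H1.
  rewrite (HG lam), (HG mu) in H1 by (intros i Hi Hn; apply (not_Rl n m a E lam mu p q i Bl Bm Hi Hn)).
  fold L in H1.
  assert (H2 : fsum m (fun i => indc (E i) * c i * y' i) = Rr + eps * B).
  { unfold Rr, B. rewrite <- fsum_scal, <- fsum_plus. apply fsum_ext. intros i Hi. unfold y'.
    destruct (EM (Rl E lam mu i)) as [HR|HR].
    - rewrite (ind_T (E i)) by apply HR. rewrite (ind_T (Rl _ _ _ _)) by auto. rewrite ind_F by tauto. ring.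
    - rewrite (ind_F (Rl _ _ _ _)) by auto. destruct (classic (E i)) as [HE|HE].
      + rewrite ind_T by auto. rewrite ind_T by tauto. ring.
      + rewrite ind_F by auto. rewrite ind_F by tauto. ring. }
  rewrite H2 in H1.
  assert (H3 : y' = y') by auto.
  assert (Hpos : forall i, (i < m)%nat -> E i -> 0 < y' i).
  { intros i Hi HE. unfold y'. destruct EM; auto. }
  specialize (H1 Hpos).
  assert (eps * B < L - Rr).
  { unfold eps. apply (Rmult_lt_reg_r (2 * (B + 1))); [lra|]. unfold Rdiv. field_simplify; nra. }
  lra.
Qed.

Lemma blowup m (P : nat -> Prop) (c lam' : nat -> R) al i0 :
  0 < al -> (i0 < m)%nat -> 0 < lam' i0 -> c i0 = 0 -> (forall i, (i < m)%nat -> P i -> 0 <= c i) ->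
  (forall y, (forall i, (i < m)%nat -> P i -> 0 < y i) -> al * G m lam' y <= fsum m (fun i => indc (P i) * c i * y i)) ->
  False.
Proof.
  intros Hal Hi0 Hl Hc Hc0 H.
  set (S0 := fsum m (fun i => indc (P i) * c i)).
  assert (HS0 : 0 <= S0) by (apply fsum_nonneg; intros i Hi; unfold indc; destruct EM; [rewrite Rmult_1_l; auto|lra]).
  set (T := exp ((ln (S0 + 1) - ln al) / lam' i0)).
  set (y := fun i => if Nat.eq_dec i i0 then T else 1).
  assert (Hy : forall i, (i < m)%nat -> P i -> 0 < y i) by (intros; unfold y; destruct Nat.eq_dec; [apply exp_pos|lra]).
  specialize (H y Hy).
  assert (E1 : fsum m (fun i => indc (P i) * c i * y i) = S0).
  { apply fsum_ext. intros i Hi. unfold y. destruct Nat.eq_dec; [subst; rewrite Hc; ring|ring]. }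
  assert (E2 : G m lam' y = (S0 + 1) / al).
  { unfold G. rewrite (fsum_single m _ i0 Hi0).
    - unfold y. destruct Nat.eq_dec; [|lia]. unfold T. rewrite ln_exp.
      replace (lam' i0 * ((ln (S0 + 1) - ln al) / lam' i0)) with (ln (S0 + 1) + - ln al) by (field; lra).
      rewrite exp_plus, exp_Ropp, !exp_ln by lra. unfold Rdiv; ring.
    - intros i Hi Hne. unfold y. destruct Nat.eq_dec; [lia|]. rewrite ln_1; ring. }
  rewrite E1, E2 in H. replace (al * ((S0 + 1) / al)) with (S0 + 1) in H by (field; lra). lra.
Qed.

Lemma W3 n m a E p q lam mu c : Wset n m a E p q lam mu c ->
  forall i, (i < m)%nat -> Rl E lam mu i -> 0 < c i.
Proof.
  intros HW i Hi HR. pose proof HW as [HA [Hp [Hq [Hpq [HEp [HEq [Bl [Bm [Hc0 [Hcp [Hcq [Hc1 HN]]]]]]]]]]]].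
  destruct HR as [HE Hlm]. destruct (Hc0 i Hi HE) as [|Hz]; auto. exfalso.
  assert (Hc0' : forall i, (i < m)%nat -> Rl E lam mu i -> 0 <= c i) by (intros i' Hi' [HE' _]; auto).
  pose proof (W2 n m a E p q lam mu c HW) as H2.
  destruct Bl as [L1 _]; destruct Bm as [M1 _].
  pose proof (L1 i Hi); pose proof (M1 i Hi).
  destruct (Rlt_dec 0 (lam i)).
  - apply (blowup m (Rl E lam mu) c lam (- c p) i); auto; try lra.
    intros y Hy. specialize (H2 y Hy). assert (0 <= - c q * G m mu y) by (pose proof (exp_pos (fsum m (fun i => mu i * ln (y i)))); unfold G; nra). lra.
  - apply (blowup m (Rl E lam mu) c mu (- c q) i); auto; try lra.
    intros y Hy. specialize (H2 y Hy). assert (0 <= - c p * G m lam y) by (pose proof (exp_pos (fsum m (fun i => lam i * ln (y i)))); unfold G; nra). lra.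
Qed.

Lemma cpt_plus f g x : continuity_pt f x -> continuity_pt g x -> continuity_pt (fun t => f t + g t) x.
Proof. intros; exact (continuity_pt_plus f g x H H0). Qed.
Lemma cpt_mult f g x : continuity_pt f x -> continuity_pt g x -> continuity_pt (fun t => f t * g t) x.
Proof. intros; exact (continuity_pt_mult f g x H H0). Qed.
Lemma cpt_minus f g x : continuity_pt f x -> continuity_pt g x -> continuity_pt (fun t => f t - g t) x.
Proof. intros; exact (continuity_pt_minus f g x H H0). Qed.
Lemma cpt_const c x : continuity_pt (fun _ => c) x.
Proof. apply continuity_pt_const. intros u v; auto. Qed.
Lemma cpt_id x : continuity_pt (fun t => t) x.
Proof. exact (derivable_continuous_pt id x (derivable_pt_id x)). Qed.
Lemma cpt_exp f x : continuity_pt f x -> continuity_pt (fun t => exp (f t)) x.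
Proof. intros H. exact (continuity_pt_comp f exp x H (derivable_continuous_pt exp _ (derivable_pt_exp _))). Qed.
Lemma cpt_ln f x : continuity_pt f x -> 0 < f x -> continuity_pt (fun t => ln (f t)) x.
Proof. intros H Hp. exact (continuity_pt_comp f ln x H (derivable_continuous_pt ln _ (exist _ _ (derivable_pt_lim_ln _ Hp)))). Qed.
Lemma cpt_fsum m (f : nat -> R -> R) x : (forall i, (i < m)%nat -> continuity_pt (f i) x) ->
  continuity_pt (fun t => fsum m (fun i => f i t)) x.
Proof.
  induction m; intros H; simpl.
  - apply cpt_const.
  - apply cpt_plus; [apply IHm; intros; apply H; lia|apply H; lia].
Qed.

Definition Yg (P : nat -> Prop) (c lam mu : nat -> R) (s r : R) : nat -> R :=
  fun i => if EM (P i) then (lam i * s + mu i * r) / c i else 1.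

Lemma exp_m1_lt : exp (-1) < 1/2.
Proof. assert (H : exp (-1) * exp 1 = 1) by (rewrite <- exp_plus; replace (-1+1) with 0 by ring; apply exp_0).
  pose proof (exp_ineq1 1 ltac:(lra)). pose proof (exp_pos (-1)). nra. Qed.

Lemma near0 m (P : nat -> Prop) (c lam mu : nat -> R) al e0 :
  0 < al -> (forall i, (i < m)%nat -> 0 <= lam i) -> (forall i, (i < m)%nat -> 0 <= mu i) -> fsum m lam = 1 ->
  (forall i, (i < m)%nat -> 0 < lam i -> P i) -> (forall i, (i < m)%nat -> P i -> 0 < c i) ->
  (e0 < m)%nat -> 0 < lam e0 -> 0 < mu e0 ->
  exists t, 0 < t <= 1/2 /\ t < al * G m lam (Yg P c lam mu t (1 - t)).
Proof.
  intros Hal Hl Hm Hs HP Hc He0 Hl0 Hm0.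
  set (l0 := lam e0). assert (Hl0p : 0 < l0) by exact Hl0.
  set (B := fun (t : R) i => if Nat.eq_dec i e0 then lam e0 * ln (mu e0 / (2 * c e0)) else lam i * (ln t + ln (lam i / c i))).
  set (C := fsum m (fun i => if Nat.eq_dec i e0 then lam e0 * ln (mu e0 / (2 * c e0)) else lam i * ln (lam i / c i))).
  assert (HB : forall t, fsum m (B t) = (1 - l0) * ln t + C).
  { intros t. unfold C, B.
    rewrite (fsum_ext m _ (fun i => ln t * lam i - ln t * (delta e0 i * lam e0) + (if Nat.eq_dec i e0 then lam e0 * ln (mu e0 / (2 * c e0)) else lam i * ln (lam i / c i)))).
    - rewrite fsum_plus, fsum_minus, !fsum_scal, Hs. rewrite (fsum_delta m e0 (fun _ => lam e0)) by auto. unfold l0; ring.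
    - intros i Hi. unfold delta. destruct Nat.eq_dec; [subst; ring|ring]. }
  assert (Hbound : forall t, 0 < t <= 1/2 -> (1 - l0) * ln t + C <= fsum m (fun i => lam i * ln (Yg P c lam mu t (1 - t) i))).
  { intros t Ht. rewrite <- HB. apply fsum_le. intros i Hi. unfold B, Yg.
    destruct (Nat.eq_dec i e0) as [->|Hne].
    - destruct EM as [HPe|HPe]; [|exfalso; apply HPe; apply HP; auto].
      apply Rmult_le_compat_l; [lra|]. specialize (Hc e0 He0 HPe). pose proof (Hl e0 He0).
      apply ln_le'. { apply Rdiv_lt_0_compat; lra. }
      unfold Rdiv. rewrite Rinv_mult. apply (Rmult_le_reg_r (c e0)); [lra|].
      field_simplify; try lra. nra.
    - destruct (Hl i Hi) as [Hli|Hli]; [|rewrite <- Hli; lra].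
      destruct EM as [HPi|HPi]; [|exfalso; apply HPi; apply HP; auto].
      specialize (Hc i Hi HPi). pose proof (Hm i Hi).
      apply Rmult_le_compat_l; [lra|]. rewrite <- ln_mult; [|lra|apply Rdiv_lt_0_compat; lra].
      apply ln_le'. { apply Rmult_lt_0_compat; [lra|apply Rdiv_lt_0_compat; lra]. }
      unfold Rdiv. apply (Rmult_le_reg_r (c i)); [lra|]. field_simplify; try lra. nra. }
  assert (Hl0le : l0 <= 1).
  { rewrite <- Hs. apply (fsum_ge_term m lam e0); auto. }
  set (t1 := exp (Rmin (-1) ((ln al + C) / l0 - 1))).
  assert (Ht1 : 0 < t1) by apply exp_pos.
  assert (Hlt1 : ln t1 <= -1 /\ ln t1 <= (ln al + C) / l0 - 1) by (unfold t1; rewrite ln_exp; split; [apply Rmin_l|apply Rmin_r]).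
  assert (Ht1h : t1 <= 1/2).
  { pose proof exp_m1_lt. unfold t1. apply Rlt_le. eapply Rle_lt_trans; [apply exp_le, Rmin_l|]. auto. }
  exists t1. split; [lra|].
  specialize (Hbound t1 ltac:(lra)).
  unfold G. rewrite <- (exp_ln al) at 1 by auto. rewrite <- exp_plus. rewrite <- (exp_ln t1) at 1 by auto.
  apply exp_increasing.
  assert (l0 * ln t1 < ln al + C).
  { apply Rle_lt_trans with (l0 * ((ln al + C) / l0 - 1)); [apply Rmult_le_compat_l; [lra|apply Hlt1]|].
    replace (l0 * ((ln al + C) / l0 - 1)) with (ln al + C - l0) by (field; lra). lra. }
  lra.
Qed.

Lemma W4 n m a E p q lam mu c : Wset n m a E p q lam mu c ->
  exists y s r, 0 < s /\ 0 < r /\ (forall i, (i < m)%nat -> E i -> 0 < y i) /\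
   (forall i, (i < m)%nat -> E i -> lam i * s + mu i * r <= c i * y i) /\
   (- c p) * G m lam y <= s /\ (- c q) * G m mu y <= r.
Proof.
  intros HW. pose proof HW as [HA [Hp [Hq [Hpq [HEp [HEq [Bl [Bm [Hc0 [Hcp [Hcq [Hc1 HN]]]]]]]]]]]].
  pose proof Bl as [L1 [L2 [L3 L4]]]. pose proof Bm as [M1 [M2 [M3 M4]]].
  set (P := Rl E lam mu).
  assert (HcP : forall i, (i < m)%nat -> P i -> 0 < c i) by (apply (W3 n m a E p q lam mu c HW)).
  set (Y := fun s r => Yg P c lam mu s r).
  assert (F1 : forall s r, 0 < s -> 0 < r -> forall i, (i < m)%nat -> P i -> 0 < Y s r i).
  { intros s r Hs Hr i Hi HPi. unfold Y, Yg. destruct EM; [|tauto]. specialize (HcP i Hi HPi).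
    destruct HPi as [_ H]. pose proof (L1 i Hi); pose proof (M1 i Hi). apply Rdiv_lt_0_compat; [|lra]; destruct (Rlt_dec 0 (lam i)); [pose proof (Rmult_lt_0_compat _ _ r0 Hs); pose proof (Rmult_le_pos _ _ H1 (Rlt_le _ _ Hr)); lra|assert (0 < mu i) by lra; pose proof (Rmult_lt_0_compat _ _ H2 Hr); pose proof (Rmult_le_pos _ _ H0 (Rlt_le _ _ Hs)); lra]. }
  assert (F1' : forall s r, 0 < s -> 0 < r -> forall i, (i < m)%nat -> E i -> 0 < Y s r i).
  { intros s r Hs Hr i Hi HE. destruct (classic (P i)) as [HPi|HPi]; [apply F1; auto|]. unfold Y, Yg. destruct EM; [tauto|lra]. }
  assert (F2 : forall s r, forall i, (i < m)%nat -> E i -> lam i * s + mu i * r <= c i * Y s r i).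
  { intros s r i Hi HE. unfold Y, Yg. destruct EM as [HPi|HPi].
    - specialize (HcP i Hi HPi). right. field. lra.
    - destruct (not_Rl n m a E lam mu p q i Bl Bm Hi HPi) as [-> ->]. specialize (Hc0 i Hi HE). lra. }
  assert (F4 : forall s r, 0 < s -> 0 < r -> (- c p) * G m lam (Y s r) + (- c q) * G m mu (Y s r) <= s + r).
  { intros s r Hs Hr. eapply Rle_trans; [apply (W2 n m a E p q lam mu c HW); apply F1; auto|].
    right. rewrite (fsum_ext m _ (fun i => s * lam i + r * mu i)).
    - rewrite fsum_plus, !fsum_scal, L3, M3. ring.
    - intros i Hi. fold P. unfold Y, Yg. destruct (EM (P i)) as [HPi|HPi].
      + rewrite ind_T by auto. specialize (HcP i Hi HPi). field. lra.
      + rewrite ind_F by auto. destruct (not_Rl n m a E lam mu p q i Bl Bm Hi HPi) as [-> ->]. ring. }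
  assert (HGpos : forall lm y, 0 < G m lm y) by (intros; apply exp_pos).
  destruct (classic (exists e0, (e0 < m)%nat /\ 0 < lam e0 /\ 0 < mu e0)) as [[e0 [He0 [Hle0 Hme0]]]|Hdec].
  -
    assert (HPl : forall i, (i < m)%nat -> 0 < lam i -> P i).
    { intros i Hi Hl. split; [apply NNPP; intros HE; rewrite L2 in Hl; auto; lra|pose proof (M1 i Hi); lra]. }
    assert (HPm : forall i, (i < m)%nat -> 0 < mu i -> P i).
    { intros i Hi Hl. split; [apply NNPP; intros HE; rewrite M2 in Hl; auto; lra|pose proof (L1 i Hi); lra]. }
    destruct (near0 m P c lam mu (- c p) e0) as [t1 [Ht1 Hphi1]]; auto; try lra.
    destruct (near0 m P c mu lam (- c q) e0) as [s1 [Hs1 Hpsi1]]; auto; try lra.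
    set (t2 := 1 - s1).
    set (phi := fun t => - c p * G m lam (Y t (1 - t)) - t).
    set (psi := fun t => - c q * G m mu (Y t (1 - t)) - (1 - t)).
    assert (Hsum : forall t, 0 < t < 1 -> phi t + psi t <= 0).
    { intros t Ht. specialize (F4 t (1 - t) ltac:(lra) ltac:(lra)). unfold phi, psi. lra. }
    assert (Hp1 : 0 < phi t1) by (unfold phi, Y; lra).
    assert (Hq2 : 0 < psi t2).
    { unfold psi. replace (G m mu (Y t2 (1 - t2))) with (G m mu (Yg P c mu lam s1 (1 - s1))); [unfold t2; lra|].
      unfold G. f_equal. apply fsum_ext. intros i Hi. unfold Y, Yg, t2. destruct EM; [|auto]. f_equal. f_equal. f_equal. ring. }
    assert (Hlt : t1 < t2).
    { destruct (Req_dec t1 t2) as [e|ne]; [|unfold t2 in *; lra].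
      exfalso. rewrite e in Hp1. specialize (Hsum t2 ltac:(unfold t2; lra)). lra. }
    assert (HcG : forall lm x, 0 < x < 1 -> continuity_pt (fun t => G m lm (Y t (1 - t))) x).
    { intros lm x Hx. unfold G. apply cpt_exp. apply cpt_fsum. intros i Hi. unfold Y, Yg.
      destruct (EM (P i)) as [HPi|HPi]; [|apply cpt_const].
      apply cpt_mult; [apply cpt_const|]. apply cpt_ln.
      - unfold Rdiv. apply cpt_mult; [|apply cpt_const]. apply cpt_plus; apply cpt_mult; try apply cpt_const.
        + apply cpt_id.
        + apply cpt_minus; [apply cpt_const|apply cpt_id].
      - pose proof (F1 x (1 - x) ltac:(lra) ltac:(lra) i Hi HPi) as HF. unfold Y, Yg in HF. destruct EM; [auto|tauto]. }
    assert (Hcont : forall x, t1 <= x <= t2 -> continuity_pt (fun t => psi t - phi t) x).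
    { intros x Hx. unfold psi, phi. apply cpt_minus; apply cpt_minus.
      - apply cpt_mult; [apply cpt_const|apply HcG; unfold t2 in *; lra].
      - apply cpt_minus; [apply cpt_const|apply cpt_id].
      - apply cpt_mult; [apply cpt_const|apply HcG; unfold t2 in *; lra].
      - apply cpt_id. }
    assert (Hf1 : psi t1 - phi t1 < 0) by (specialize (Hsum t1 ltac:(lra)); lra).
    assert (Hf2 : 0 < psi t2 - phi t2) by (specialize (Hsum t2 ltac:(unfold t2 in *; lra)); lra).
    destruct (Ranalysis5.IVT_interv (fun t => psi t - phi t) t1 t2 Hcont Hlt Hf1 Hf2) as [z [Hz1 Hz2]].
    assert (Hz : 0 < z < 1) by (unfold t2 in *; lra).
    specialize (Hsum z Hz).
    exists (Y z (1 - z)), z, (1 - z). repeat split; try lra.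
    + apply F1'; lra.
    + apply F2.
    + unfold phi, psi in *. lra.
    + unfold phi, psi in *. lra.
  -
    assert (Hd : forall i, (i < m)%nat -> lam i = 0 \/ mu i = 0).
    { intros i Hi. destruct (L1 i Hi) as [h1|h1]; [|auto]. destruct (M1 i Hi) as [h2|h2]; [|auto]. exfalso; apply Hdec; eauto. }
    assert (HGs : forall lm k s r, 0 < k -> 0 < s -> 0 < r ->
       (forall i, (i < m)%nat -> 0 <= lm i) -> fsum m lm = 1 ->
       (forall i, (i < m)%nat -> lm i <> 0 -> P i /\ Y s r i = k * Y 1 1 i) ->
       G m lm (Y s r) = k * G m lm (Y 1 1)).
    { intros lm k s r Hk Hs Hr H0 H1 H2. unfold G.
      rewrite (fsum_ext m _ (fun i => ln k * lm i + lm i * ln (Y 1 1 i))).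
      - rewrite fsum_plus, fsum_scal, H1, Rmult_1_r, exp_plus, exp_ln; auto.
      - intros i Hi. destruct (Req_dec (lm i) 0) as [->|Hne]; [ring|].
        destruct (H2 i Hi Hne) as [HPi ->]. rewrite ln_mult; [ring|auto|]. apply F1; auto; lra. }
    assert (E1 : forall s r, 0 < s -> 0 < r -> G m lam (Y s r) = s * G m lam (Y 1 1)).
    { intros s r Hs Hr. apply (HGs lam s s r); auto. intros i Hi Hne.
      destruct (Hd i Hi) as [|Hmi]; [tauto|].
      assert (HPi : P i) by (split; [apply NNPP; intros HE; apply Hne; apply L2; auto|pose proof (L1 i Hi); lra]).
      split; auto. unfold Y, Yg. destruct EM; [|tauto]. rewrite Hmi. specialize (HcP i Hi HPi). field. lra. }
    assert (E2 : forall s r, 0 < s -> 0 < r -> G m mu (Y s r) = r * G m mu (Y 1 1)).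
    { intros s r Hs Hr. apply (HGs mu r s r); auto. intros i Hi Hne.
      destruct (Hd i Hi) as [Hli|]; [|tauto].
      assert (HPi : P i) by (split; [apply NNPP; intros HE; apply Hne; apply M2; auto|pose proof (M1 i Hi); lra]).
      split; auto. unfold Y, Yg. destruct EM; [|tauto]. rewrite Hli. specialize (HcP i Hi HPi). field. lra. }
    set (g1 := - c p * G m lam (Y 1 1)). set (g2 := - c q * G m mu (Y 1 1)).
    assert (Hg1 : 0 <= g1) by (unfold g1; pose proof (HGpos lam (Y 1 1)); nra).
    assert (Hg2 : 0 <= g2) by (unfold g2; pose proof (HGpos mu (Y 1 1)); nra).
    assert (Hineq : forall s r, 0 < s -> 0 < r -> s * g1 + r * g2 <= s + r).
    { intros s r Hs Hr. specialize (F4 s r Hs Hr). rewrite E1, E2 in F4 by auto. unfold g1, g2. lra. }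
    exists (Y 1 1), 1, 1. repeat split; try lra.
    + apply F1'; lra.
    + apply F2.
    + fold g1. apply Rnot_lt_le. intros Hg. specialize (Hineq 1 ((g1 - 1)/2) ltac:(lra) ltac:(apply Rdiv_lt_0_compat; lra)).
      assert (0 <= (g1 - 1) / 2 * g2) by (apply Rmult_le_pos; auto; apply Rlt_le, Rdiv_lt_0_compat; lra). lra.
    + fold g2. apply Rnot_lt_le. intros Hg. specialize (Hineq ((g2 - 1)/2) 1 ltac:(apply Rdiv_lt_0_compat; lra) ltac:(lra)).
      assert (0 <= (g2 - 1) / 2 * g1) by (apply Rmult_le_pos; auto; apply Rlt_le, Rdiv_lt_0_compat; lra). lra.
Qed.

Lemma SAGE_two n m a p q u w : (p < m)%nat -> (q < m)%nat -> p <> q -> C_AGE n m a p u -> C_AGE n m a q w ->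
  C_SAGE n m a (fun i => u i + w i).
Proof.
  intros Hp Hq Hpq Hu Hw. exists (fun k => if Nat.eq_dec k p then u else if Nat.eq_dec k q then w else fun _ => 0).
  split.
  - intros k Hk. destruct Nat.eq_dec; [subst; auto|]. destruct Nat.eq_dec; [subst; auto|apply AGE_zero].
  - intros i Hi. rewrite (fsum_ext m _ (fun k => delta p k * u i + delta q k * w i)).
    + rewrite fsum_plus, !fsum_scalr. rewrite (fsum_ext m (delta p) (fun k => delta p k * 1)) by (intros; ring).
      rewrite (fsum_ext m (delta q) (fun k => delta q k * 1)) by (intros; ring). rewrite !fsum_delta by auto. ring.
    + intros k Hk. unfold delta. destruct (Nat.eq_dec k p); destruct (Nat.eq_dec k q); subst; try lia; ring.
Qed.

Lemma WSAGE n m a E p q lam mu c : Wset n m a E p q lam mu c -> C_SAGE n m a c.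
Proof.
  intros HW. destruct (W4 n m a E p q lam mu c HW) as [y [s [r [Hs [Hr [Hy [Hyc [Hgs Hgr]]]]]]]].
  pose proof HW as [HA [Hp [Hq [Hpq [HEp [HEq [Bl [Bm [Hc0 [Hcp [Hcq [Hc1 HN]]]]]]]]]]]].
  pose proof Bl as [L1 [L2 [L3 L4]]]. pose proof Bm as [M1 [M2 [M3 M4]]].
  set (w := fun i => if Nat.eq_dec i q then c q else mu i * r / y i).
  set (u := fun i => if Nat.eq_dec i q then 0 else c i - mu i * r / y i).
  apply (SAGE_ext n m a (fun i => u i + w i)).
  { intros i Hi. unfold u, w. destruct Nat.eq_dec; subst; ring. }
  apply (SAGE_two n m a p q); auto.
  - apply (age_from_sol n m a E lam p y s (- c p) u Bl Hp HEp Hy Hs Hgs).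
    + unfold u. destruct Nat.eq_dec; [lia|]. rewrite M2 by auto. unfold Rdiv; ring.
    + intros i Hi Hne. unfold u. destruct (Nat.eq_dec i q) as [->|Hiq]; [split; [lra|tauto]|].
      destruct (classic (E i)) as [HE|HE].
      * specialize (Hy i Hi HE). specialize (Hyc i Hi HE). pose proof (L1 i Hi).
        assert (Heq : (c i - mu i * r / y i) * y i = c i * y i - mu i * r) by (field; lra).
        split; [|intros; rewrite Heq; lra].
        apply (Rmult_le_reg_r (y i)); auto. rewrite Heq. nra.
      * rewrite Hc1, M2 by auto. split; [unfold Rdiv; lra|tauto].
  - apply (age_from_sol n m a E mu q y r (- c q) w Bm Hq HEq Hy Hr Hgr).
    + unfold w. destruct Nat.eq_dec; [ring|lia].
    + intros i Hi Hne. unfold w. destruct Nat.eq_dec; [lia|].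
      destruct (classic (E i)) as [HE|HE].
      * specialize (Hy i Hi HE). pose proof (M1 i Hi). split.
        -- unfold Rdiv. apply Rmult_le_pos; [nra|apply Rlt_le, Rinv_0_lt_compat; lra].
        -- intros _. right. field. lra.
      * rewrite M2 by auto. split; [unfold Rdiv; lra|tauto].
Qed.

Lemma weight_one m (w : nat -> R) p : (forall i, (i < m)%nat -> 0 <= w i) -> fsum m w = 1 -> (p < m)%nat -> w p = 1 ->
  forall i, (i < m)%nat -> i <> p -> w i = 0.
Proof.
  intros H1 H2 Hp Hw. set (nu := fun i => if Nat.eq_dec i p then 0 else w i).
  assert (Hs : fsum m nu = 0).
  { assert (fsum m w = fsum m nu + w p).
    { rewrite (fsum_ext m w (fun i => nu i + delta p i * w p)) by (intros; unfold nu, delta; destruct Nat.eq_dec; subst; ring).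
      rewrite fsum_plus. rewrite (fsum_delta m p (fun _ => w p)) by auto. auto. }
    lra. }
  intros i Hi Hne. pose proof (fsum_nonneg_zero m nu ltac:(intros; unfold nu; destruct Nat.eq_dec; [lra|auto]) Hs i Hi).
  unfold nu in H. destruct Nat.eq_dec; [lia|auto].
Qed.

Lemma conv_ext n m a (S : nat -> Prop) p p' : conv_cols n m a S p -> (forall j, (j < n)%nat -> p j = p' j) -> conv_cols n m a S p'.
Proof. intros [l [L1 [L2 [L3 L4]]]] H. exists l. repeat split; auto. intros j Hj. rewrite <- H; auto. Qed.

Lemma conv_single n m a i p : (i < m)%nat -> conv_cols n m a (fun k => k = i) p -> forall j, (j < n)%nat -> p j = a i j.
Proof.
  intros Hi [l [L1 [L2 [L3 L4]]]] j Hj.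
  assert (Hz : forall k, (k < m)%nat -> k <> i -> l k = 0) by (intros; apply L2; auto).
  rewrite (fsum_single m l i Hi Hz) in L3. rewrite L4 by auto. rewrite (fsum_single m _ i Hi).
  - rewrite L3; ring.
  - intros k Hk Hne. rewrite Hz; auto; ring.
Qed.

Lemma vertex_sign n m a blk l i c :
  (forall i i', (i < m)%nat -> (i' < m)%nat -> i <> i' -> ~ eqv n (a i) (a i')) ->
  (i < m)%nat -> extreme_col n m a blk l i -> C_NNS n m a c -> (forall k, (k < m)%nat -> blk k <> l -> c k = 0) ->
  0 <= c i.
Proof.
  intros Hdist Hi [Hb [HC Hext]] HN Hout.
  destruct (expose n m a (fun k => blk k = l) (fun k => k = i)) as [v [beta [V1 V2]]].
  - intros k ->; auto.
  - exists i; split; auto.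
  - split; [|split].
    + intros p Hp. apply (conv_ext n m a _ (a i)); [apply conv_self; auto|]. intros j Hj. symmetry; apply (conv_single n m a i p Hi Hp j Hj).
    + intros x y t Hx Hy Ht p Hp. apply (conv_ext n m a _ (a i)); [apply conv_self; auto|].
      intros j Hj. rewrite Hp, (conv_single n m a i x Hi Hx), (conv_single n m a i y Hi Hy) by auto. ring.
    + intros x y p Hx Hy [t [Ht Hp]] Fp.
      assert (Hseg : in_open_seg n x y (a i)).
      { exists t; split; auto. intros j Hj. rewrite <- (conv_single n m a i p Hi Fp j Hj). auto. }
      specialize (Hext x y Hx Hy Hseg).
      assert (Hxa : forall j, (j < n)%nat -> x j = a i j).
      { intros j Hj. rewrite <- (conv_single n m a i p Hi Fp j Hj), Hp, (Hext j Hj) by auto. ring. }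
      split; apply (conv_ext n m a _ (a i)); try (apply conv_self; auto); intros j Hj; [rewrite Hxa|rewrite <- Hext, Hxa]; auto.
  - intros k Hk Hbk Hne Hc. apply (Hdist k i Hk Hi Hne). intros j Hj. apply (conv_single n m a i (a k) Hi Hc j Hj).
  - pose proof (restrict_nns n m a c (fun k => k = i) v beta HN) as H.
    assert (H' : C_NNS n m a (fun k => if EM (k = i) then c k else 0)).
    { apply H; auto. intros k Hk Hne. destruct (Nat.eq_dec (blk k) l) as [e|ne]; [right; apply V2; auto|left; apply Hout; auto]. }
    specialize (H' (fun _ => 0)). unfold Sig in H'. rewrite (fsum_single m _ i Hi) in H'.
    + destruct EM; [|tauto]. pose proof (exp_pos (dot n (a i) (fun _ => 0))). nra.
    + intros k Hk Hne. destruct EM; [tauto|ring].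
Qed.

Lemma nonext_comb n m a blk l p : nonextreme_col n m a blk l p ->
  exists xi, (forall i, (i < m)%nat -> 0 <= xi i) /\ (forall i, (i < m)%nat -> blk i <> l -> xi i = 0) /\
    fsum m xi = 1 /\ (forall j, (j < n)%nat -> a p j = fsum m (fun i => xi i * a i j)) /\ xi p < 1.
Proof.
  intros [Hp [Hb Hne]].
  destruct (classic (exists x y, New_blk n m a blk l x /\ New_blk n m a blk l y /\ in_open_seg n x y (a p) /\ ~ eqv n x y))
    as [[x [y [Cx [Cy [[t [Ht Hseg]] Hxy]]]]]|Hno].
  2: { exfalso. apply Hne. split; [apply conv_self; auto|]. intros x y Cx Cy Hs. apply NNPP. intros Hn. apply Hno. exists x, y; auto. }
  destruct Cx as [lx [X1 [X2 [X3 X4]]]]. destruct Cy as [ly [Y1 [Y2 [Y3 Y4]]]].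
  exists (fun i => t * lx i + (1 - t) * ly i). repeat split.
  - intros i Hi. specialize (X1 i Hi); specialize (Y1 i Hi). nra.
  - intros i Hi Hbi. rewrite X2, Y2; auto; ring.
  - rewrite fsum_plus, !fsum_scal, X3, Y3. ring.
  - intros j Hj. rewrite Hseg, X4, Y4 by auto. rewrite <- !fsum_scal, <- fsum_plus. apply fsum_ext; intros; ring.
  - apply Rnot_le_lt. intros Hge.
    assert (Hlx : lx p <= 1) by (rewrite <- X3; apply fsum_ge_term; auto).
    assert (Hly : ly p <= 1) by (rewrite <- Y3; apply fsum_ge_term; auto).
    assert (Ex : lx p = 1) by nra. assert (Ey : ly p = 1) by nra.
    apply Hxy. intros j Hj.
    rewrite X4, Y4 by auto. rewrite (fsum_single m _ p Hp), (fsum_single m (fun i => ly i * a i j) p Hp).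
    + rewrite Ex, Ey; ring.
    + intros i Hi Hne'. rewrite (weight_one m ly p Y1 Y3 Hp Ey i Hi Hne'); ring.
    + intros i Hi Hne'. rewrite (weight_one m lx p X1 X3 Hp Ex i Hi Hne'); ring.
Qed.

Lemma decomp m (Bk E : nat -> Prop) p q (xi f : nat -> R) :
  (p < m)%nat -> (q < m)%nat -> p <> q -> ~ E p -> ~ E q ->
  (forall i, (i < m)%nat -> Bk i -> ~ E i -> i = p \/ i = q) -> (forall i, (i < m)%nat -> ~ Bk i -> xi i = 0) ->
  fsum m (fun i => xi i * f i) = xi p * f p + xi q * f q + fsum m (fun i => indc (E i) * xi i * f i).
Proof.
  intros Hp Hq Hpq HEp HEq HB Hz.
  rewrite (fsum_ext m _ (fun i => delta p i * (xi p * f p) + delta q i * (xi q * f q) + indc (E i) * xi i * f i)).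
  - rewrite !fsum_plus, !fsum_delta by auto. auto.
  - intros i Hi. unfold delta. destruct (Nat.eq_dec i p) as [->|Hip].
    + destruct Nat.eq_dec; [lia|]. rewrite ind_F by auto. ring.
    + destruct (Nat.eq_dec i q) as [->|Hiq].
      * rewrite ind_F by auto. ring.
      * destruct (classic (E i)) as [HE|HE]; [rewrite ind_T by auto; ring|].
        rewrite ind_F by auto. destruct (classic (Bk i)) as [HBi|HBi].
        -- destruct (HB i Hi HBi HE); lia.
        -- rewrite Hz by auto. ring.
Qed.

Lemma bary_two n m a (Bk E : nat -> Prop) p q xi eta :
  (p < m)%nat -> (q < m)%nat -> p <> q -> ~ eqv n (a p) (a q) -> ~ E p -> ~ E q ->
  (forall i, (i < m)%nat -> Bk i -> ~ E i -> i = p \/ i = q) ->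
  (forall i, (i < m)%nat -> 0 <= xi i) -> (forall i, (i < m)%nat -> ~ Bk i -> xi i = 0) -> fsum m xi = 1 ->
  (forall j, (j < n)%nat -> a p j = fsum m (fun i => xi i * a i j)) -> xi p < 1 ->
  (forall i, (i < m)%nat -> 0 <= eta i) -> (forall i, (i < m)%nat -> ~ Bk i -> eta i = 0) -> fsum m eta = 1 ->
  (forall j, (j < n)%nat -> a q j = fsum m (fun i => eta i * a i j)) -> eta q < 1 ->
  exists lam mu, bary n m a E lam p /\ bary n m a E mu q.
Proof.
  intros Hp Hq Hpq Hdpq HEp HEq HB X1 X2 X3 X4 X5 Y1 Y2 Y3 Y4 Y5.
  set (s1 := fsum m (fun i => indc (E i) * xi i * 1)). set (s2 := fsum m (fun i => indc (E i) * eta i * 1)).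
  set (e1 := fun j => fsum m (fun i => indc (E i) * xi i * a i j)). set (e2 := fun j => fsum m (fun i => indc (E i) * eta i * a i j)).
  assert (Hs1 : 1 = xi p + xi q + s1).
  { rewrite <- X3. rewrite (fsum_ext m xi (fun i => xi i * 1)) by (intros; ring). rewrite (decomp m Bk E p q xi (fun _ => 1)) by auto. cbv beta. unfold s1. ring. }
  assert (Hs2 : 1 = eta p + eta q + s2).
  { rewrite <- Y3. rewrite (fsum_ext m eta (fun i => eta i * 1)) by (intros; ring). rewrite (decomp m Bk E p q eta (fun _ => 1)) by auto. cbv beta. unfold s2. ring. }
  assert (He1 : forall j, (j < n)%nat -> a p j = xi p * a p j + xi q * a q j + e1 j).
  { intros j Hj. rewrite X4 at 1 by auto. apply (decomp m Bk E p q xi (fun i => a i j)); auto. }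
  assert (He2 : forall j, (j < n)%nat -> a q j = eta p * a p j + eta q * a q j + e2 j).
  { intros j Hj. rewrite Y4 at 1 by auto. apply (decomp m Bk E p q eta (fun i => a i j)); auto. }
  assert (Hnn : forall (w : nat -> R), (forall i, (i < m)%nat -> 0 <= w i) -> forall i, (i < m)%nat -> 0 <= indc (E i) * w i * 1).
  { intros w Hw i Hi. unfold indc. destruct EM; [rewrite Rmult_1_l, Rmult_1_r; auto|lra]. }
  assert (Hs1p : 0 <= s1) by (apply fsum_nonneg; apply Hnn; auto).
  assert (Hs2p : 0 <= s2) by (apply fsum_nonneg; apply Hnn; auto).
  pose proof (X1 p Hp); pose proof (X1 q Hq); pose proof (Y1 p Hp); pose proof (Y1 q Hq).
  set (D := (1 - xi p) * (1 - eta q) - xi q * eta p).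
  assert (HD : 0 < D).
  { apply Rnot_le_lt. intros HD.
    assert (Hs10 : s1 = 0).
    { destruct (Rle_lt_dec s1 0) as [|Hs]; [lra|]. exfalso.
      assert (xi q < 1 - xi p) by lra.
      destruct (Rle_lt_dec (eta p) 0).
      - assert (He0 : eta p = 0) by lra. unfold D in HD. rewrite He0 in HD. nra.
      - unfold D in HD. nra. }
    assert (Hz : forall i, (i < m)%nat -> indc (E i) * xi i * 1 = 0) by (apply fsum_nonneg_zero; auto; apply Hnn; auto).
    apply Hdpq. intros j Hj.
    assert (He10 : e1 j = 0) by (unfold e1; apply fsum_zero; intros i Hi; specialize (Hz i Hi); rewrite Rmult_1_r in Hz; rewrite Hz; ring).
    specialize (He1 j Hj). rewrite He10 in He1.
    assert (Hxq : xi q = 1 - xi p) by lra.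
    rewrite Hxq in He1. apply (Rmult_eq_reg_l (1 - xi p)); [|lra]. lra. }
  exists (fun i => indc (E i) * ((1 - eta q) * xi i + xi q * eta i) / D),
         (fun i => indc (E i) * ((1 - xi p) * eta i + eta p * xi i) / D).
  split; repeat split.
  - intros i Hi. specialize (X1 i Hi); specialize (Y1 i Hi). unfold indc. destruct EM; unfold Rdiv.
    + apply Rmult_le_pos; [|apply Rlt_le, Rinv_0_lt_compat; auto]. nra.
    + lra.
  - intros i Hi HE. rewrite ind_F by auto. unfold Rdiv; ring.
  - unfold Rdiv. rewrite fsum_scalr. rewrite (fsum_ext m _ (fun i => (1 - eta q) * (indc (E i) * xi i * 1) + xi q * (indc (E i) * eta i * 1))) by (intros; ring).
    rewrite fsum_plus, !fsum_scal. fold s1 s2. apply (Rmult_eq_reg_r D); [|lra]. rewrite Rmult_assoc, Rinv_l by lra. unfold D. nra.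
  - intros j Hj. unfold Rdiv.
    rewrite (fsum_ext m _ (fun i => / D * ((1 - eta q) * (indc (E i) * xi i * a i j) + xi q * (indc (E i) * eta i * a i j)))) by (intros; ring).
    rewrite fsum_scal, fsum_plus, !fsum_scal. fold (e1 j) (e2 j).
    apply (Rmult_eq_reg_l D); [|lra]. rewrite <- Rmult_assoc, Rinv_r, Rmult_1_l by lra.
    specialize (He1 j Hj); specialize (He2 j Hj). unfold D. nra.
  - intros i Hi. specialize (X1 i Hi); specialize (Y1 i Hi). unfold indc. destruct EM; unfold Rdiv.
    + apply Rmult_le_pos; [|apply Rlt_le, Rinv_0_lt_compat; auto]. nra.
    + lra.
  - intros i Hi HE. rewrite ind_F by auto. unfold Rdiv; ring.
  - unfold Rdiv. rewrite fsum_scalr. rewrite (fsum_ext m _ (fun i => (1 - xi p) * (indc (E i) * eta i * 1) + eta p * (indc (E i) * xi i * 1))) by (intros; ring).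
    rewrite fsum_plus, !fsum_scal. fold s1 s2. apply (Rmult_eq_reg_r D); [|lra]. rewrite Rmult_assoc, Rinv_l by lra. unfold D. nra.
  - intros j Hj. unfold Rdiv.
    rewrite (fsum_ext m _ (fun i => / D * ((1 - xi p) * (indc (E i) * eta i * a i j) + eta p * (indc (E i) * xi i * a i j)))) by (intros; ring).
    rewrite fsum_scal, fsum_plus, !fsum_scal. fold (e1 j) (e2 j).
    apply (Rmult_eq_reg_l D); [|lra]. rewrite <- Rmult_assoc, Rinv_r, Rmult_1_l by lra.
    specialize (He1 j Hj); specialize (He2 j Hj). unfold D. nra.
Qed.

Definition cl (blk : nat -> nat) (c : nat -> R) (l : nat) : nat -> R := fun i => if Nat.eq_dec (blk i) l then c i else 0.

Lemma block_nns n m a K blk c l :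
  (forall i, (i < m)%nat -> (blk i < K)%nat) ->
  (forall l, (l < K)%nat -> is_face n (New_blk n m a blk l) (New n m a)) ->
  (forall l l' p, (l < K)%nat -> (l' < K)%nat -> l <> l' -> New_blk n m a blk l p -> New_blk n m a blk l' p -> False) ->
  (l < K)%nat -> C_NNS n m a c -> C_NNS n m a (cl blk c l).
Proof.
  intros Hblk Hface Hdisj Hl HN.
  destruct (classic (exists i0, (i0 < m)%nat /\ blk i0 = l)) as [Hex|Hno].
  - destruct (expose n m a (fun _ => True) (fun i => blk i = l)) as [v [beta [V1 V2]]]; auto.
    + exact (Hface l Hl).
    + intros i Hi _ Hne Hc. apply (Hdisj l (blk i) (a i)); auto. apply conv_self; auto.
    + apply (NNS_ext n m a (fun i => if EM (blk i = l) then c i else 0)).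
      * intros i Hi. unfold cl. destruct EM; destruct Nat.eq_dec; tauto.
      * apply (restrict_nns n m a c _ v beta HN V1). intros i Hi Hne. right. apply V2; auto.
  - apply (NNS_ext n m a (fun _ => 0)); [|apply NNS_zero].
    intros i Hi. unfold cl. destruct Nat.eq_dec; auto. exfalso; apply Hno; eauto.
Qed.

Lemma block_sage n m a K blk c l
  (Hdist : forall i i', (i < m)%nat -> (i' < m)%nat -> i <> i' -> ~ eqv n (a i) (a i'))
  (H1 : forall l, (l < K)%nat ->
          aff_indep_cols n m a (fun i => extreme_col n m a blk l i) ->
          forall i1 i2 i3, nonextreme_col n m a blk l i1 -> nonextreme_col n m a blk l i2 ->
            nonextreme_col n m a blk l i3 -> i1 = i2 \/ i1 = i3 \/ i2 = i3)
  (H2 : forall l, (l < K)%nat ->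
          ~ aff_indep_cols n m a (fun i => extreme_col n m a blk l i) ->
          forall i1 i2, nonextreme_col n m a blk l i1 -> nonextreme_col n m a blk l i2 ->
            i1 = i2) :
  (l < K)%nat -> C_NNS n m a (cl blk c l) -> C_SAGE n m a (cl blk c l).
Proof.
  intros Hl HN. set (B := cl blk c l) in *.
  assert (Hout : forall k, (k < m)%nat -> blk k <> l -> B k = 0) by (intros; unfold B, cl; destruct Nat.eq_dec; tauto).
  assert (Hvs : forall i, (i < m)%nat -> extreme_col n m a blk l i -> 0 <= B i).
  { intros i Hi He. apply (vertex_sign n m a blk l i B); auto. }
  assert (Hneg : forall i, (i < m)%nat -> B i < 0 -> nonextreme_col n m a blk l i).
  { intros i Hi Hb. destruct (Nat.eq_dec (blk i) l) as [e|ne]; [|rewrite Hout in Hb; auto; lra].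
    split; auto. split; auto. intros Hx. specialize (Hvs i Hi (conj e Hx)). lra. }
  destruct (classic (exists i1, (i1 < m)%nat /\ B i1 < 0)) as [[i1 [Hi1 Hn1]]|Hall].
  - destruct (classic (exists i2, (i2 < m)%nat /\ i2 <> i1 /\ B i2 < 0)) as [[i2 [Hi2 [Hne Hn2]]]|Hone].
    + pose proof (Hneg i1 Hi1 Hn1) as N1. pose proof (Hneg i2 Hi2 Hn2) as N2.
      destruct (classic (aff_indep_cols n m a (fun i => extreme_col n m a blk l i))) as [HA|HNA].
      * set (E := fun i => extreme_col n m a blk l i).
        assert (HE1 : ~ E i1) by (intros [_ Hx]; destruct N1 as [_ [_ Hx']]; tauto).
        assert (HE2 : ~ E i2) by (intros [_ Hx]; destruct N2 as [_ [_ Hx']]; tauto).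
        assert (HBk : forall i, (i < m)%nat -> blk i = l -> ~ E i -> i = i1 \/ i = i2).
        { intros i Hi Hb HEi. assert (Ni : nonextreme_col n m a blk l i) by (split; auto; split; auto; intros Hx; apply HEi; split; auto).
          destruct (H1 l Hl HA i i1 i2 Ni N1 N2) as [|[|]]; auto. lia. }
        destruct (nonext_comb n m a blk l i1 N1) as [xi [X1 [X2 [X3 [X4 X5]]]]].
        destruct (nonext_comb n m a blk l i2 N2) as [eta [Y1 [Y2 [Y3 [Y4 Y5]]]]].
        destruct (bary_two n m a (fun i => blk i = l) E i1 i2 xi eta) as [lam [mu [Bl Bm]]]; auto.
        apply (WSAGE n m a E i1 i2 lam mu B).
        refine (conj HA (conj Hi1 (conj Hi2 (conj (fun e => Hne (eq_sym e)) (conj HE1 (conj HE2 (conj Bl (conj Bm (conj _ (conj Hn1 (conj Hn2 (conj _ HN)))))))))))).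
        -- intros i Hi HEi. apply Hvs; auto.
        -- intros i Hi HEi Hn1' Hn2'. destruct (Nat.eq_dec (blk i) l) as [e|ne]; [|apply Hout; auto].
           destruct (HBk i Hi e HEi); lia.
      * exfalso. apply Hne. symmetry. apply (H2 l Hl HNA i1 i2 N1 N2).
    + apply (AGE_SAGE n m a i1); auto. split; auto. intros i Hi Hne. apply Rnot_lt_le. intros Hb. apply Hone; eauto.
  - destruct (Nat.eq_dec m 0) as [->|Hm].
    + exists (fun _ _ => 0). split; intros; lia.
    + apply (AGE_SAGE n m a 0); [lia|]. split; auto. intros i Hi _. apply Rnot_lt_le. intros Hb. apply Hall; eauto.
Qed.

Theorem mainTheorem10 (n m : nat) (a : nat -> nat -> R)
  (* distinct columns *)
  (Hdist : forall i i', (i < m)%nat -> (i' < m)%nat -> i <> i' -> ~ eqv n (a i) (a i'))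
  (K : nat) (blk : nat -> nat)
  (Hblk : forall i, (i < m)%nat -> (blk i < K)%nat)
  (* each New(A^(l)) is a face of New(A) *)
  (Hface : forall l, (l < K)%nat -> is_face n (New_blk n m a blk l) (New n m a))
  (* the faces are mutually disjoint *)
  (Hdisj : forall l l' p, (l < K)%nat -> (l' < K)%nat -> l <> l' ->
             New_blk n m a blk l p -> New_blk n m a blk l' p -> False)
  (* (1) affinely independent extreme points: at most two non-extreme columns *)
  (H1 : forall l, (l < K)%nat ->
          aff_indep_cols n m a (fun i => extreme_col n m a blk l i) ->
          forall i1 i2 i3, nonextreme_col n m a blk l i1 -> nonextreme_col n m a blk l i2 ->
            nonextreme_col n m a blk l i3 -> i1 = i2 \/ i1 = i3 \/ i2 = i3)
  (* (2) otherwise: at most one non-extreme column *)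
  (H2 : forall l, (l < K)%nat ->
          ~ aff_indep_cols n m a (fun i => extreme_col n m a blk l i) ->
          forall i1 i2, nonextreme_col n m a blk l i1 -> nonextreme_col n m a blk l i2 ->
            i1 = i2) :
  forall c : nat -> R, C_SAGE n m a c <-> C_NNS n m a c.
Proof.
  intros c. split; [apply SAGE_NNS|]. intros HN.
  apply (SAGE_ext n m a (fun i => fsum K (fun l => cl blk c l i))).
  { intros i Hi. rewrite (fsum_single K _ (blk i) (Hblk i Hi)).
    - unfold cl. destruct Nat.eq_dec; tauto.
    - intros l _ Hne. unfold cl. destruct Nat.eq_dec; [lia|auto]. }
  apply SAGE_fsum. intros l Hl. apply (block_sage n m a K blk c l Hdist H1 H2 Hl).
  apply (block_nns n m a K blk c l Hblk Hface Hdisj Hl HN).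
Qed.
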